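(* Let $\alpha>1$, and suppose that both $f$ and $Pf$ belong to $\mathcal{M}_\alpha$. Then for all $x>0$, $(Vf)(x)=(P(Pf))(x)$, i.e. the Voronoi operator equals the iterated Müntz operator $P^2$.
   Context: For $\alpha>1$, $\mathcal{M}_\alpha$ denotes the class of functions $f:[0,\infty)\to\mathbb{C}$ with $f\in C^{2}[0,\infty)$ and $f^{(j)}(x)=O(x^{-\alpha-j})$ as $x\to\infty$ for $j=0,1,2$. The Müntz operator is $(Pf)(x)=\sum_{n=1}^\infty f(nx)-\frac1x\int_0^\infty f(y)\,dy$, $x>0$ (extended continuously to $x=0$ when it is required to lie in $\mathcal{M}_\alpha$). The Voronoi operator is $(Vf)(x)=\sum_{n=1}^\infty d(n)f(nx)-\int_0^\infty f(xy)(\log y+2\gamma)\,dy$, where $d(n)$ is the number of divisors of $n$ and $\gamma$ is Euler's constant. *)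

(* Defs.v *)
From Stdlib Require Import Reals Lra Lia Arith List.
Import ListNotations.
Open Scope R_scope.

Definition ndiv (n : nat) : nat :=
  length (filter (fun k => Nat.eqb (Nat.modulo n k) 0) (seq 1 n)).

Definition is_euler_gamma (g : R) : Prop :=
  Un_cv (fun n => sum_f_R0 (fun k => / INR (k + 1)) n - ln (INR (n + 1))) g.

Definition right_deriv (f : R -> R) (x l : R) : Prop :=
  forall eps, 0 < eps -> exists delta, 0 < delta /\
    forall h, 0 < h -> h < delta -> Rabs ((f (x + h) - f x) / h - l) < eps.

Definition cont_nonneg (g : R -> R) (x : R) : Prop :=
  forall eps, 0 < eps -> exists delta, 0 < delta /\
    forall y, 0 <= y -> Rabs (y - x) < delta -> Rabs (g y - g x) < eps.

(* The class M_alpha for a real-valued f on [0,oo):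
   f in C^2[0,oo) (one-sided derivatives at 0, f'' continuous on [0,oo)),
   and f^(j)(x) = O(x^(-alpha-j)) as x -> oo, j = 0,1,2. *)
Definition M_alpha (alpha : R) (f : R -> R) : Prop :=
  exists f1 f2 : R -> R,
    (forall x, 0 < x -> derivable_pt_lim f x (f1 x)) /\
    (forall x, 0 < x -> derivable_pt_lim f1 x (f2 x)) /\
    right_deriv f 0 (f1 0) /\ right_deriv f1 0 (f2 0) /\
    (forall x, 0 <= x -> cont_nonneg f2 x) /\
    (exists C X, 0 < X /\ forall x, X <= x ->
        Rabs (f x) <= C * Rpower x (- alpha) /\
        Rabs (f1 x) <= C * Rpower x (- alpha - 1) /\
        Rabs (f2 x) <= C * Rpower x (- alpha - 2)).

(* Complex-valued f = fr + i fi is in M_alpha iff both parts are. *)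
Definition M_alpha_C (alpha : R) (fr fi : R -> R) : Prop :=
  M_alpha alpha fr /\ M_alpha alpha fi.

Definition improper_int (h : R -> R) (I : R) : Prop :=
  (forall a b, 0 < a -> a <= b -> inhabited (Riemann_integrable h a b)) /\
  forall eps, 0 < eps -> exists d M, 0 < d /\ 0 < M /\
    forall a b (pr : Riemann_integrable h a b),
      0 < a -> a < d -> M < b -> Rabs (RiemannInt pr - I) < eps.

Definition Muntz_at (f : R -> R) (x y : R) : Prop :=
  exists S I, infinite_sum (fun n => f (INR (n + 1) * x)) S /\
    improper_int f I /\ y = S - I / x.

Definition Voronoi_at (gamma : R) (f : R -> R) (x y : R) : Prop :=
  exists S I,
    infinite_sum (fun n => INR (ndiv (n + 1)) * f (INR (n + 1) * x)) S /\
    improper_int (fun t => f (x * t) * (ln t + 2 * gamma)) I /\ y = S - I.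

(* Main.v *)
Require Import Defs.
From Stdlib Require Import Reals Lra Lia Arith List Psatz.
From Coquelicot Require Import Coquelicot.
Open Scope R_scope.


Lemma rp_pos x c : 0 < Rpower x c.
Proof. unfold Rpower; apply exp_pos. Qed.

Lemma exp_le a b : a <= b -> exp a <= exp b.
Proof. intros [H|H]; [left; apply exp_increasing; auto|subst; lra]. Qed.

Lemma rp_decr c x y : c <= 0 -> 0 < x <= y -> Rpower y c <= Rpower x c.
Proof.
  intros Hc [Hx Hxy]. unfold Rpower. apply exp_le.
  destruct (Req_dec x y) as [->|Hne]; [lra|].
  assert (ln x < ln y) by (apply ln_increasing; lra). nra.
Qed.

Lemma rp_incr c x y : 0 <= c -> 0 < x <= y -> Rpower x c <= Rpower y c.
Proof. intros Hc Hxy. apply Rle_Rpower_l; auto. Qed.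

Lemma rp_mul x y c : 0 < x -> 0 < y -> Rpower (x*y) c = Rpower x c * Rpower y c.
Proof. intros; rewrite Rpower_mult_distr; auto. Qed.

Lemma rp_le1 c x : c <= 0 -> 1 <= x -> Rpower x c <= 1.
Proof. intros. rewrite <- (Rpower_O x) by lra. apply Rle_Rpower; lra. Qed.

Lemma rp_expo_le x c d : 1 <= x -> c <= d -> Rpower x c <= Rpower x d.
Proof. intros; apply Rle_Rpower; lra. Qed.

Lemma rp_m1 x : 0 < x -> Rpower x (-1) = / x.
Proof. intros; replace (-1) with (- (1)) by ring; rewrite Rpower_Ropp, Rpower_1; auto. Qed.

Lemma rp_shift x c : 0 < x -> Rpower x (c - 1) = Rpower x c / x.
Proof. intros. unfold Rminus. rewrite Rpower_plus, rp_m1; auto. Qed.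

Lemma rp_deriv c x : 0 < x -> is_derive (fun t => Rpower t c) x (c * Rpower x (c - 1)).
Proof. intros. apply is_derive_Reals, derivable_pt_lim_power; auto. Qed.

Lemma rp_small eps c : 0 < eps -> c < 0 -> exists Y, 0 < Y /\ forall y, Y <= y -> Rpower y c < eps.
Proof.
  intros He Hc. exists (exp (ln eps / c) + 1). split.
  { pose proof (exp_pos (ln eps / c)); lra. }
  intros y Hy. pose proof (exp_pos (ln eps / c)).
  unfold Rpower. rewrite <- (exp_ln eps) by auto. apply exp_increasing.
  assert (ln (exp (ln eps / c)) < ln y) by (apply ln_increasing; lra).
  rewrite ln_exp in H0.
  assert (c * ln y < c * (ln eps / c)) by nra.
  replace (c * (ln eps / c)) with (ln eps) in H1 by (field; lra). lra.
Qed.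

Lemma rp_tele al k : 1 < al -> 0 < k ->
  Rpower (k+1) (-al) <= (Rpower k (1-al) - Rpower (k+1) (1-al)) / (al - 1).
Proof.
  intros Hal Hk.
  destruct (MVT_gen (fun t => Rpower t (1-al)) k (k+1) (fun t => (1-al) * Rpower t (1 - al - 1)))
    as [c [Hc Heq]].
  - intros t Ht. rewrite Rmin_left in Ht by lra. apply rp_deriv. lra.
  - intros t Ht. rewrite Rmin_left in Ht by lra. apply derivable_continuous_pt.
    exists ((1-al) * Rpower t (1-al-1)). apply derivable_pt_lim_power. lra.
  - rewrite Rmin_left, Rmax_right in Hc by lra.
    cbv beta in Heq. replace (1 - al - 1) with (-al) in Heq by ring.
    assert (Rpower (k+1) (-al) <= Rpower c (-al)) by (apply rp_decr; lra).
    apply Rmult_le_reg_r with (al - 1); [lra|].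
    unfold Rdiv. rewrite Rmult_assoc, Rinv_l, Rmult_1_r by lra.
    replace (Rpower k (1 - al) - Rpower (k + 1) (1 - al)) with ((al - 1) * Rpower c (-al)) by (replace (Rpower k (1 - al) - Rpower (k + 1) (1 - al)) with (- (Rpower (k + 1) (1 - al) - Rpower k (1 - al))) by ring; rewrite Heq; ring).
    nra.
Qed.

Lemma rp_int al t b : 1 < al -> 0 < t <= b ->
  is_RInt (fun u => Rpower u (-al)) t b ((Rpower t (1-al) - Rpower b (1-al)) / (al - 1)).
Proof.
  intros Hal Htb.
  replace ((Rpower t (1-al) - Rpower b (1-al)) / (al - 1)) with
    (minus (Rpower b (1-al) / (1-al)) (Rpower t (1-al) / (1-al))).
  2:{ unfold minus, plus, opp; simpl. field. lra. }
  apply (is_RInt_derive (fun u => Rpower u (1-al) / (1-al))).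
  - intros x Hx. rewrite Rmin_left, Rmax_right in Hx by lra.
    replace (Rpower x (-al)) with (/(1-al) * ((1-al) * Rpower x (1-al-1))).
    2:{ replace (1-al-1) with (-al) by ring. field. lra. }
    unfold Rdiv. eapply is_derive_ext. { intros; rewrite Rmult_comm; reflexivity. }
    apply is_derive_scal. apply rp_deriv. lra.
  - intros x Hx. rewrite Rmin_left, Rmax_right in Hx by lra.
    apply continuity_pt_filterlim. apply derivable_continuous_pt.
    exists ((-al) * Rpower x (-al-1)). apply derivable_pt_lim_power. lra.
Qed.

Fixpoint sumN (F : nat -> R) (n : nat) : R :=
  match n with O => 0 | S k => sumN F k + F k end.

Lemma sumN_S F n : sumN F (S n) = sumN F n + F n.
Proof. reflexivity. Qed.

Lemma sumN_R0 F n : sum_f_R0 F n = sumN F (S n).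
Proof. induction n; simpl in *; [ring|rewrite IHn; ring]. Qed.

Lemma sumN_ext F G n : (forall i, (i < n)%nat -> F i = G i) -> sumN F n = sumN G n.
Proof. induction n; intros H; simpl; auto. rewrite IHn, H; auto. Qed.

Lemma sumN_plus F G n : sumN (fun i => F i + G i) n = sumN F n + sumN G n.
Proof. induction n; simpl; [ring|rewrite IHn; ring]. Qed.

Lemma sumN_minus F G n : sumN (fun i => F i - G i) n = sumN F n - sumN G n.
Proof. induction n; simpl; [ring|rewrite IHn; ring]. Qed.

Lemma sumN_scal K F n : sumN (fun i => K * F i) n = K * sumN F n.
Proof. induction n; simpl; [ring|rewrite IHn; ring]. Qed.

Lemma sumN_le F G n : (forall i, (i < n)%nat -> F i <= G i) -> sumN F n <= sumN G n.
Proof. induction n; intros H; simpl; [lra|]. pose proof (H n (Nat.lt_succ_diag_r n)).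
  assert (sumN F n <= sumN G n) by (apply IHn; intros; apply H; lia). lra. Qed.

Lemma sumN_abs F G n : (forall i, (i < n)%nat -> Rabs (F i) <= G i) -> Rabs (sumN F n) <= sumN G n.
Proof. induction n; intros H; simpl. { rewrite Rabs_R0; lra. }
  pose proof (H n (Nat.lt_succ_diag_r n)).
  assert (Rabs (sumN F n) <= sumN G n) by (apply IHn; intros; apply H; lia).
  pose proof (Rabs_triang (sumN F n) (F n)). lra. Qed.

Lemma sumN_nonneg F n : (forall i, 0 <= F i) -> 0 <= sumN F n.
Proof. induction n; intros H; simpl; [lra|]. pose proof (H n). pose proof (IHn H). lra. Qed.

Lemma sumN_zero F n : (forall i, (i < n)%nat -> F i = 0) -> sumN F n = 0.
Proof. induction n; intros H; simpl; auto. rewrite IHn. rewrite H. ring. lia. intros; apply H; lia. Qed.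

Lemma sumN_diff F N M : (N <= M)%nat ->
  sumN F M - sumN F N = sumN (fun m => if (N <=? m)%nat then F m else 0) M.
Proof.
  induction M; intros H.
  - assert (N = 0%nat) by lia; subst. simpl. ring.
  - destruct (Nat.eq_dec N (S M)) as [->|Hne].
    + rewrite Rminus_diag. symmetry. apply sumN_zero. intros i Hi.
      destruct (S M <=? i)%nat eqn:E; auto. apply Nat.leb_le in E; lia.
    + simpl. rewrite <- IHM by lia. destruct (N <=? M)%nat eqn:E. ring.
      apply Nat.leb_gt in E. lia.
Qed.

Lemma sumN_ind_scal K (b : nat -> bool) F n :
  sumN (fun m => if b m then K * F m else 0) n = K * sumN (fun m => if b m then F m else 0) n.
Proof. rewrite <- sumN_scal. apply sumN_ext. intros. destruct (b i); ring. Qed.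

Definition qq (al : R) (i : nat) : R := Rpower (INR i + 1) (-al).

Lemma qq_pos al i : 0 < qq al i.
Proof. apply rp_pos. Qed.

Lemma Rpower_base1 c : Rpower 1 c = 1.
Proof. unfold Rpower. rewrite ln_1, Rmult_0_r, exp_0. reflexivity. Qed.

Lemma tail_qq_aux al r M : 1 < al -> (1 <= r)%nat ->
  sumN (fun m => if (r <=? m)%nat then qq al m else 0) M <=
  (Rpower (INR r) (1-al) - Rpower (INR (Nat.max r M)) (1-al)) / (al - 1).
Proof.
  intros Hal Hr. induction M.
  - simpl. rewrite Nat.max_0_r. unfold Rdiv. rewrite Rminus_diag. lra.
  - rewrite sumN_S. destruct (r <=? M)%nat eqn:E.
    + apply Nat.leb_le in E. rewrite Nat.max_r in IHM by lia. rewrite Nat.max_r by lia.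
      assert (0 < INR M) by (apply lt_0_INR; lia).
      pose proof (rp_tele al (INR M) Hal H). unfold qq in *. rewrite S_INR.
      unfold Rdiv in *. rewrite Rmult_minus_distr_r in *. lra.
    + apply Nat.leb_gt in E. rewrite Nat.max_l in IHM by lia. rewrite Nat.max_l by lia. lra.
Qed.

Lemma tail_qq al r M : 1 < al -> (1 <= r)%nat ->
  sumN (fun m => if (r <=? m)%nat then qq al m else 0) M <= Rpower (INR r) (1-al) / (al - 1).
Proof.
  intros Hal Hr. eapply Rle_trans. apply tail_qq_aux; auto.
  pose proof (rp_pos (INR (Nat.max r M)) (1-al)).
  apply Rmult_le_compat_r. { apply Rlt_le, Rinv_0_lt_compat; lra. } lra.
Qed.

Definition Zc (al : R) := 1 + 1 / (al - 1).

Lemma total_qq al M : 1 < al -> sumN (qq al) M <= Zc al.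
Proof.
  intros Hal.
  assert (H : sumN (qq al) M <= 1 + sumN (fun m => if (1 <=? m)%nat then qq al m else 0) M).
  { induction M; simpl; [lra|]. destruct M.
    - simpl. unfold qq. simpl. replace (0+1) with 1 by ring; rewrite Rpower_base1. lra.
    - simpl (1 <=? S M)%nat. cbv iota. simpl in IHM. simpl. lra. }
  pose proof (tail_qq al 1 M Hal (le_n _)). simpl INR in H0. rewrite Rpower_base1 in H0.
  unfold Zc. lra.
Qed.

Lemma isum_sumN u l : infinite_sum u l <->
  (forall eps, 0 < eps -> exists N, forall n, (N <= n)%nat -> Rabs (sumN u n - l) < eps).
Proof.
  split.
  - intros H eps He. destruct (H eps He) as [N HN]. exists (S N). intros n Hn.
    destruct n as [|k]; [lia|]. rewrite <- sumN_R0. apply HN. lia.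
  - intros H eps He. destruct (H eps He) as [N HN]. exists N. intros n Hn.
    unfold R_dist. rewrite sumN_R0. apply HN. lia.
Qed.

Lemma isum_tail u l c N T : infinite_sum u l -> (forall n, Rabs (u n) <= c n) ->
  (forall M, sumN (fun m => if (N <=? m)%nat then c m else 0) M <= T) ->
  Rabs (l - sumN u N) <= T.
Proof.
  intros Hs Hc HT. apply Rnot_lt_le. intros Hlt.
  set (eps := Rabs (l - sumN u N) - T).
  destruct (proj1 (isum_sumN u l) Hs eps ltac:(unfold eps; lra)) as [n0 Hn0].
  set (n := Nat.max n0 N).
  specialize (Hn0 n ltac:(unfold n; lia)).
  assert (Rabs (sumN u n - sumN u N) <= T).
  { rewrite sumN_diff by (unfold n; lia). eapply Rle_trans; [|apply (HT n)].
    apply sumN_abs. intros i _. destruct (N <=? i)%nat; auto. rewrite Rabs_R0.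
    specialize (Hc 0%nat). pose proof (Rabs_pos (u 0%nat)). lra. }
  pose proof (Rabs_triang (l - sumN u n) (sumN u n - sumN u N)).
  replace (l - sumN u n + (sumN u n - sumN u N)) with (l - sumN u N) in H0 by ring.
  rewrite Rabs_minus_sym in Hn0. unfold eps in *. lra.
Qed.

Lemma isum_bound u l c T : infinite_sum u l -> (forall n, Rabs (u n) <= c n) ->
  (forall M, sumN c M <= T) -> Rabs l <= T.
Proof.
  intros Hs Hc HT. replace l with (l - sumN u 0) by (simpl; ring).
  apply (isum_tail u l c 0 T Hs Hc). intros M. eapply Rle_trans; [|apply (HT M)].
  right. apply sumN_ext. intros; reflexivity.
Qed.

Lemma isum_exists al u K : 1 < al -> (forall n, Rabs (u n) <= K * qq al n) ->
  exists l, infinite_sum u l.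
Proof.
  intros Hal Hu.
  assert (HK : 0 <= K). { specialize (Hu 0%nat). pose proof (qq_pos al 0).
    pose proof (Rabs_pos (u 0%nat)). destruct (Rle_dec 0 K); auto. nra. }
  assert (Hc : Cauchy_crit (sum_f_R0 u)).
  { intros eps He.
    destruct (rp_small (eps * (al - 1) / (K + 1)) (1 - al)) as [Y [HY HYy]].
    { apply Rdiv_lt_0_compat; [nra|lra]. } { lra. }
    destruct (INR_unbounded Y) as [N HN].
    exists (S N). intros n m Hn Hm. unfold R_dist. rewrite !sumN_R0.
    assert (Hgen : forall a b, (S N <= a <= b)%nat -> Rabs (sumN u b - sumN u a) < eps).
    { intros a b Hab. rewrite sumN_diff by lia.
      eapply Rle_lt_trans. apply (sumN_abs _ (fun m => if (a <=? m)%nat then K * qq al m else 0)).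
      { intros i _. destruct (a <=? i)%nat; auto. rewrite Rabs_R0; lra. }
      rewrite sumN_ind_scal. pose proof (tail_qq al a b Hal ltac:(lia)).
      assert (Rpower (INR a) (1-al) < eps * (al - 1) / (K + 1)).
      { apply HYy. assert (Ha : (S N <= a)%nat) by lia. apply le_INR in Ha. rewrite S_INR in Ha. lra. }
      apply Rle_lt_trans with (K * (Rpower (INR a) (1 - al) / (al - 1))).
      { apply Rmult_le_compat_l; auto. }
      apply Rle_lt_trans with ((K+1) * (Rpower (INR a) (1 - al) / (al - 1))).
      { pose proof (rp_pos (INR a) (1-al)). assert (0 < /(al-1)) by (apply Rinv_0_lt_compat; lra).
        unfold Rdiv. nra. }
      apply (Rmult_lt_compat_l (K+1)) in H0; [|lra].
      replace ((K + 1) * (eps * (al - 1) / (K + 1))) with (eps * (al-1)) in H0 by (field; lra).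
      unfold Rdiv. apply Rmult_lt_reg_r with (al - 1); [lra|].
      rewrite Rmult_assoc, (Rmult_assoc _ (/ (al-1))), Rinv_l by lra. lra. }
    destruct (Nat.le_ge_cases (S n) (S m)).
    - rewrite Rabs_minus_sym. apply Hgen. lia.
    - apply Hgen. lia. }
  destruct (Rcomplete.R_complete _ Hc) as [l Hl]. exists l. exact Hl.
Qed.


Lemma cauchy2 (J : R -> R -> R) :
  (forall eps, 0 < eps -> exists d M, 0 < d /\ 0 < M /\ forall a b a' b',
      0 < a -> a < d -> 0 < a' -> a' < d -> M < b -> M < b' -> Rabs (J a b - J a' b') < eps) ->
  exists L, forall eps, 0 < eps -> exists d M, 0 < d /\ 0 < M /\
      forall a b, 0 < a -> a < d -> M < b -> Rabs (J a b - L) < eps.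
Proof.
  intros HC.
  set (u n := J (/ (INR n + 1)) (INR n + 1)).
  assert (Hreg : forall d M, 0 < d -> exists N, forall n, (N <= n)%nat ->
            0 < / (INR n + 1) /\ / (INR n + 1) < d /\ M < INR n + 1).
  { intros d M Hd. destruct (INR_unbounded (Rmax M (/ d))) as [N HN]. exists N.
    intros n Hn. apply le_INR in Hn. pose proof (pos_INR n).
    assert (M < INR n + 1) by (pose proof (Rmax_l M (/d)); lra).
    assert (/ d < INR n + 1) by (pose proof (Rmax_r M (/d)); lra).
    split; [apply Rinv_0_lt_compat; lra|split; auto].
    rewrite <- (Rinv_inv d). apply Rinv_lt_contravar; auto.
    apply Rmult_lt_0_compat; [apply Rinv_0_lt_compat; auto|lra]. }
  assert (Hc : Cauchy_crit u).
  { intros eps He. destruct (HC eps He) as [d [M [Hd [HM H]]]].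
    destruct (Hreg d M Hd) as [N HN]. exists N. intros n m Hn Hm.
    unfold R_dist, u. destruct (HN n Hn) as [? [? ?]]. destruct (HN m Hm) as [? [? ?]].
    apply H; auto. }
  destruct (Rcomplete.R_complete _ Hc) as [L HL]. exists L.
  intros eps He. destruct (HC (eps/2) ltac:(lra)) as [d [M [Hd [HM H]]]].
  exists d, M. split; auto. split; auto. intros a b Ha Had Hb.
  destruct (HL (eps/2) ltac:(lra)) as [N1 HN1].
  destruct (Hreg d M Hd) as [N2 HN2].
  set (n := Nat.max N1 N2). specialize (HN1 n ltac:(unfold n; lia)).
  destruct (HN2 n ltac:(unfold n; lia)) as [? [? ?]].
  specialize (H a b _ _ Ha Had H0 H1 Hb H2). unfold R_dist, u in *.
  pose proof (Rabs_triang (J a b - J (/ (INR n + 1)) (INR n + 1)) (J (/ (INR n + 1)) (INR n + 1) - L)).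
  replace (J a b - J (/ (INR n + 1)) (INR n + 1) + (J (/ (INR n + 1)) (INR n + 1) - L)) with (J a b - L) in H3 by ring.
  lra.
Qed.

Lemma mk_improper (h : R -> R) L :
  (forall a b, 0 < a -> a <= b -> ex_RInt h a b) ->
  (forall eps, 0 < eps -> exists d M, 0 < d /\ 0 < M /\
      forall a b, 0 < a -> a < d -> M < b -> Rabs (RInt h a b - L) < eps) ->
  improper_int h L.
Proof.
  intros Hex Hlim. split.
  - intros a b Ha Hab. constructor. apply ex_RInt_Reals_0. auto.
  - intros eps He. destruct (Hlim eps He) as [d [M [Hd [HM H]]]]. exists d, M.
    split; auto. split; auto. intros a b pr Ha Had Hb. rewrite <- RInt_Reals. auto.
Qed.

Lemma improper_RInt h L : improper_int h L ->
  forall eps, 0 < eps -> exists d M, 0 < d /\ 0 < M /\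
      forall a b, 0 < a -> a < d -> M < b -> a <= b -> Rabs (RInt h a b - L) < eps.
Proof.
  intros [Hi Hl] eps He. destruct (Hl eps He) as [d [M [Hd [HM H]]]]. exists d, M.
  split; auto. split; auto. intros a b Ha Had Hb Hab. destruct (Hi a b Ha Hab) as [pr].
  rewrite (RInt_Reals h a b pr). auto.
Qed.

Lemma improper_unique h L1 L2 : improper_int h L1 -> improper_int h L2 -> L1 = L2.
Proof.
  intros H1 H2. apply Rminus_diag_uniq_sym. apply Rabs_eq_0.
  apply Rle_antisym; [|apply Rabs_pos]. apply Rnot_lt_le. intros Hlt.
  set (e := Rabs (L2 - L1) / 2).
  destruct (improper_RInt h L1 H1 e ltac:(unfold e; lra)) as [d1 [M1 [Hd1 [HM1 A1]]]].
  destruct (improper_RInt h L2 H2 e ltac:(unfold e; lra)) as [d2 [M2 [Hd2 [HM2 A2]]]].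
  set (a := Rmin d1 d2 / 2). set (b := Rmax (Rmax M1 M2) a + 1).
  assert (0 < a) by (unfold a; apply Rmin_case; lra).
  assert (a < d1) by (unfold a; pose proof (Rmin_l d1 d2); lra).
  assert (a < d2) by (unfold a; pose proof (Rmin_r d1 d2); lra).
  assert (M1 < b /\ M2 < b /\ a <= b) as [Hb1 [Hb2 Hab]].
  { unfold b. pose proof (Rmax_l (Rmax M1 M2) a). pose proof (Rmax_r (Rmax M1 M2) a).
    pose proof (Rmax_l M1 M2). pose proof (Rmax_r M1 M2). lra. }
  specialize (A1 a b H H0 Hb1 Hab). specialize (A2 a b H H3 Hb2 Hab).
  pose proof (Rabs_triang (L2 - RInt h a b) (RInt h a b - L1)) as T.
  replace (L2 - RInt h a b + (RInt h a b - L1)) with (L2 - L1) in T by ring.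
  rewrite Rabs_minus_sym in A2. unfold e in *. lra.
Qed.

Lemma cont_ed (F : R -> R) y :
  (forall eps, 0 < eps -> exists del, 0 < del /\ forall z, Rabs (z - y) < del -> Rabs (F z - F y) < eps) ->
  continuous F y.
Proof.
  intros H. apply filterlim_locally. intros eps.
  destruct (H eps (cond_pos eps)) as [del [Hd Hz]].
  exists (mkposreal del Hd). intros z Hz'. apply Hz. exact Hz'.
Qed.

Lemma cont_ed_inv (F : R -> R) y : continuous F y ->
  forall eps, 0 < eps -> exists del, 0 < del /\ forall z, Rabs (z - y) < del -> Rabs (F z - F y) < eps.
Proof.
  intros H eps He. pose proof (proj1 (filterlim_locally F (F y)) H (mkposreal eps He)) as [del Hd].
  exists del. split; [apply cond_pos|]. intros z Hz. apply (Hd z). exact Hz.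
Qed.

Lemma dpl_cont f x l : derivable_pt_lim f x l -> continuous f x.
Proof. intros H. apply continuity_pt_filterlim. apply derivable_continuous_pt. exists l; auto. Qed.

Lemma right_deriv_cont f l : right_deriv f 0 l ->
  forall eps, 0 < eps -> exists del, 0 < del /\ forall h, 0 < h < del -> Rabs (f h - f 0) < eps.
Proof.
  intros H eps He. destruct (H 1 ltac:(lra)) as [d [Hd Hh]].
  exists (Rmin d (eps / (Rabs l + 1))). split.
  { apply Rmin_case; auto. apply Rdiv_lt_0_compat; auto. pose proof (Rabs_pos l); lra. }
  intros h [Hh0 Hhd]. assert (h < d) by (pose proof (Rmin_l d (eps / (Rabs l + 1))); lra).
  assert (h < eps / (Rabs l + 1)) by (pose proof (Rmin_r d (eps / (Rabs l + 1))); lra).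
  specialize (Hh h Hh0 H0). rewrite Rplus_0_l in Hh.
  assert (Rabs ((f h - f 0) / h) < Rabs l + 1).
  { pose proof (Rabs_triang ((f h - f 0) / h - l) l). replace ((f h - f 0) / h - l + l) with ((f h - f 0)/h) in H2 by ring. lra. }
  replace (f h - f 0) with (h * ((f h - f 0) / h)) by (field; lra).
  rewrite Rabs_mult, (Rabs_right h) by lra.
  apply Rlt_le_trans with (h * (Rabs l + 1)). { apply Rmult_lt_compat_l; auto. }
  apply Rmult_lt_compat_r with (r := Rabs l + 1) in H1; [|pose proof (Rabs_pos l); lra].
  unfold Rdiv in H1. rewrite Rmult_assoc, Rinv_l in H1 by (pose proof (Rabs_pos l); lra). lra.
Qed.

Definition ext0 (f : R -> R) (y : R) : R := f (Rmax 0 y).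

Lemma ext0_eq f y : 0 <= y -> ext0 f y = f y.
Proof. intros; unfold ext0; rewrite Rmax_right; auto. Qed.

Lemma ext0_cont f :
  (forall y, 0 < y -> continuous f y) ->
  (forall eps, 0 < eps -> exists del, 0 < del /\ forall h, 0 < h < del -> Rabs (f h - f 0) < eps) ->
  forall y, continuous (ext0 f) y.
Proof.
  intros Hc H0 y. apply cont_ed. intros eps He.
  destruct (Rlt_le_dec 0 y) as [Hy|Hy].
  - destruct (cont_ed_inv f y (Hc y Hy) eps He) as [d [Hd Hz]].
    exists (Rmin d y). split; [apply Rmin_case; auto|]. intros z Hzy.
    pose proof (Rmin_l d y). pose proof (Rmin_r d y).
    assert (0 < z) by (apply Rabs_def2 in Hzy; lra).
    rewrite !ext0_eq by lra. apply Hz. lra.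
  - destruct (Req_dec y 0) as [->|Hne].
    + destruct (H0 eps He) as [d [Hd Hz]]. exists d. split; auto. intros z Hz'.
      rewrite (ext0_eq f 0) by lra. unfold ext0.
      destruct (Rle_dec z 0). { rewrite Rmax_left by auto. rewrite Rminus_diag, Rabs_R0; auto. }
      rewrite Rmax_right by lra. apply Hz. rewrite Rminus_0_r in Hz'. apply Rabs_def2 in Hz'. lra.
    + exists (-y). split; [lra|]. intros z Hz. unfold ext0.
      apply Rabs_def2 in Hz. rewrite !Rmax_left by lra. rewrite Rminus_diag, Rabs_R0; auto.
Qed.

Lemma cont_bound F a b : a <= b -> (forall z, a <= z <= b -> continuous F z) ->
  exists M, 0 <= M /\ forall z, a <= z <= b -> Rabs (F z) <= M.
Proof.
  intros Hab Hc.
  destruct (continuity_ab_maj F a b Hab) as [x1 [H1 _]].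
  { intros c Hc'. apply continuity_pt_filterlim. apply Hc; auto. }
  destruct (continuity_ab_maj (fun z => - F z) a b Hab) as [x2 [H2 _]].
  { intros c Hc'. apply continuity_pt_opp. apply continuity_pt_filterlim. apply Hc; auto. }
  exists (Rmax 0 (Rmax (F x1) (- F x2))). split; [apply Rmax_l|].
  intros z Hz. specialize (H1 z Hz). specialize (H2 z Hz).
  pose proof (Rmax_l 0 (Rmax (F x1) (- F x2))). pose proof (Rmax_r 0 (Rmax (F x1) (- F x2))).
  pose proof (Rmax_l (F x1) (- F x2)). pose proof (Rmax_r (F x1) (- F x2)).
  apply Rabs_le. lra.
Qed.

Lemma decay_glob F al C X x0 : 0 <= al -> 0 < x0 -> 0 < X ->
  (forall z, x0 <= z -> continuous F z) ->
  (forall t, X <= t -> Rabs (F t) <= C * Rpower t (-al)) ->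
  exists B, 0 <= B /\ forall t, x0 <= t -> Rabs (F t) <= B * Rpower t (-al).
Proof.
  intros Hal Hx0 HX Hc Hd. set (Xm := Rmax x0 X).
  destruct (cont_bound F x0 Xm) as [M [HM HMb]].
  { apply Rmax_l. } { intros z Hz; apply Hc; lra. }
  exists (Rmax C 0 + M * Rpower Xm al). split.
  { pose proof (Rmax_r C 0). pose proof (rp_pos Xm al). nra. }
  intros t Ht. pose proof (rp_pos t (-al)). pose proof (Rmax_l C 0). pose proof (Rmax_r C 0).
  destruct (Rle_dec t Xm).
  - specialize (HMb t ltac:(lra)).
    assert (Rpower t al * Rpower t (-al) = 1).
    { rewrite <- Rpower_plus. replace (al + - al) with 0 by ring. apply Rpower_O. lra. }
    assert (Rpower t al <= Rpower Xm al).
    { apply rp_incr; auto; lra. }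
    assert (M * (Rpower t al * Rpower t (-al)) <= M * (Rpower Xm al * Rpower t (-al))).
    { apply Rmult_le_compat_l; auto. apply Rmult_le_compat_r; lra. }
    rewrite H2, Rmult_1_r in H4. nra.
  - assert (X <= t) by (pose proof (Rmax_r x0 X); unfold Xm in *; lra).
    specialize (Hd t H2). pose proof (rp_pos Xm al).
    assert (0 <= M * Rpower Xm al * Rpower t (-al)) by (apply Rmult_le_pos; [apply Rmult_le_pos|]; lra).
    assert (C * Rpower t (-al) <= Rmax C 0 * Rpower t (-al)) by (apply Rmult_le_compat_r; lra).
    rewrite Rmult_plus_distr_r. lra.
Qed.


Lemma coef_nonneg x B p : Rabs x <= B * p -> 0 < p -> 0 <= B.
Proof. intros H Hp. pose proof (Rabs_pos x). destruct (Rle_dec 0 B); auto. nra. Qed.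

Lemma exR (f : R -> R) a b : (forall z, Rmin a b <= z <= Rmax a b -> continuous f z) -> ex_RInt f a b.
Proof. intros H. apply (ex_RInt_continuous (V := R_CompleteNormedModule)). exact H. Qed.

Lemma abs_RInt_const2 (f : R -> R) (u v M : R) : (forall z, Rmin u v <= z <= Rmax u v -> continuous f z) ->
  (forall z, Rmin u v <= z <= Rmax u v -> Rabs (f z) <= M) -> Rabs (RInt f u v) <= Rabs (v - u) * M.
Proof.
  intros Hc Hb. destruct (Rle_dec u v).
  - rewrite Rmin_left, Rmax_right in Hc, Hb by auto. rewrite (Rabs_right (v - u)) by lra.
    apply abs_RInt_le_const; auto. apply exR. rewrite Rmin_left, Rmax_right by auto. auto.
  - rewrite Rmin_right, Rmax_left in Hc, Hb by lra. rewrite <- opp_RInt_swap.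
    + rewrite Rabs_Ropp. replace (Rabs (v - u)) with (u - v) by (rewrite Rabs_left by lra; ring).
      apply abs_RInt_le_const; [lra| |auto]. apply exR. rewrite Rmin_left, Rmax_right by lra. auto.
    + apply exR. rewrite Rmin_left, Rmax_right by lra. auto.
Qed.

Lemma rp_intB al B t b : 1 < al -> 0 < t <= b ->
  is_RInt (fun u => B * Rpower u (-al)) t b (B * ((Rpower t (1-al) - Rpower b (1-al)) / (al - 1))).
Proof.
  intros Hal Htb. exact (is_RInt_scal _ _ _ B _ (rp_int al t b Hal Htb)).
Qed.

Lemma int_decay (al : R) (F : R -> R) (Bf t b : R) : 1 < al -> 0 < t <= b ->
  (forall z, t <= z <= b -> continuous F z) ->
  (forall z, t <= z <= b -> Rabs (F z) <= Bf * Rpower z (-al)) ->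
  Rabs (RInt F t b) <= Bf * Rpower t (1-al) / (al - 1).
Proof.
  intros Hal Htb Hc Hb.
  assert (HB : 0 <= Bf) by (apply (coef_nonneg (F t) Bf (Rpower t (-al))); [apply Hb; lra|apply rp_pos]).
  assert (Hex : ex_RInt F t b).
  { apply exR. rewrite Rmin_left, Rmax_right by lra. exact Hc. }
  pose proof (rp_intB al Bf t b Hal Htb) as HI.
  assert (Hexp : ex_RInt (fun u => Bf * Rpower u (-al)) t b) by (exists (Bf * ((Rpower t (1-al) - Rpower b (1-al)) / (al - 1))); exact HI).
  eapply Rle_trans. { apply abs_RInt_le; [lra|exact Hex]. }
  eapply Rle_trans. { apply (RInt_le (fun u => Rabs (F u)) (fun u => Bf * Rpower u (-al))); [lra| | exact Hexp |].
    - apply exR. intros z Hz. rewrite Rmin_left, Rmax_right in Hz by lra.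
      apply continuous_comp with (g := Rabs); [apply Hc; lra|]. apply continuous_Rabs.
    - intros z Hz. apply Hb. lra. }
  rewrite (is_RInt_unique _ _ _ _ HI).
  pose proof (rp_pos b (1-al)). unfold Rdiv. rewrite <- Rmult_assoc.
  apply Rmult_le_compat_r. { apply Rlt_le, Rinv_0_lt_compat; lra. }
  apply Rmult_le_compat_l; [exact HB|]. lra.
Qed.

Definition Phi (F : R -> R) (t : R) : R := RInt F 0 t.
Definition hh (F : R -> R) (t : R) : R := Phi F t / t.

Lemma Phi_deriv (F : R -> R) t : (forall y, continuous F y) -> is_derive (Phi F) t (F t).
Proof.
  intros Hc. unfold Phi. apply (is_derive_RInt (V := R_CompleteNormedModule) F (RInt F 0) 0 t).
  - apply filter_forall. intros b. apply (RInt_correct (V := R_CompleteNormedModule)). apply exR. intros; apply Hc.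
  - apply Hc.
Qed.

Lemma Phi_diff (F : R -> R) a b : (forall y, continuous F y) -> Phi F b - Phi F a = RInt F a b.
Proof.
  intros Hc. unfold Phi. rewrite <- (RInt_Chasles F 0 a b).
  - unfold plus; simpl. ring.
  - apply exR; intros; apply Hc.
  - apply exR; intros; apply Hc.
Qed.

Lemma exd_cont (f : R -> R) (x l : R) : is_derive f x l -> continuous f x.
Proof. intros H. apply (ex_derive_continuous (K := R_AbsRing) (V := R_NormedModule)). exists l. exact H. Qed.

Lemma Phi_cont (F : R -> R) (t : R) : (forall y, continuous F y) -> continuous (Phi F) t.
Proof. intros. apply (exd_cont _ _ (F t)). apply Phi_deriv; assumption. Qed.

Lemma Phi_small (F : R -> R) M0 t : (forall y, continuous F y) -> (forall t, 0 <= t <= 1 -> Rabs (F t) <= M0) ->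
  0 <= t <= 1 -> Rabs (Phi F t) <= M0 * t.
Proof.
  intros Hc Hb Ht. unfold Phi. rewrite Rmult_comm. replace t with (t - 0) at 2 by ring.
  apply abs_RInt_le_const; [lra| |].
  - apply exR; intros; apply Hc.
  - intros; apply Hb; lra.
Qed.

Lemma Phi_large al (F : R -> R) Bf t : 1 < al -> (forall y, continuous F y) ->
  (forall t, 1 <= t -> Rabs (F t) <= Bf * Rpower t (-al)) ->
  (forall eps, 0 < eps -> exists M, forall b, M < b -> Rabs (Phi F b) < eps) ->
  1 <= t -> Rabs (Phi F t) <= Bf / (al - 1) * Rpower t (1 - al).
Proof.
  intros Hal Hc Hd Hz Ht. apply Rle_plus_epsilon. intros eps He.
  destruct (Hz eps He) as [M HM]. set (b := Rmax M t + 1).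
  assert (M < b /\ t <= b) as [H1 H2] by (unfold b; pose proof (Rmax_l M t); pose proof (Rmax_r M t); lra).
  specialize (HM b H1). pose proof (Phi_diff F t b Hc).
  pose proof (int_decay al F Bf t b Hal ltac:(lra) ltac:(intros; apply Hc) ltac:(intros; apply Hd; lra)).
  replace (Phi F t) with (Phi F b - RInt F t b) by lra.
  pose proof (Rabs_triang (Phi F b) (- RInt F t b)). rewrite Rabs_Ropp in H3.
  replace (Bf / (al - 1) * Rpower t (1 - al)) with (Bf * Rpower t (1 - al) / (al - 1)) by (field; lra).
  unfold Rminus at 1. lra.
Qed.

Lemma Phi_global al (F : R -> R) M0 Bf t : 1 < al -> (forall y, continuous F y) ->
  (forall t, 0 <= t <= 1 -> Rabs (F t) <= M0) ->
  (forall t, 1 <= t -> Rabs (F t) <= Bf * Rpower t (-al)) ->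
  (forall eps, 0 < eps -> exists M, forall b, M < b -> Rabs (Phi F b) < eps) ->
  0 < t -> Rabs (Phi F t) <= (M0 + Bf / (al - 1)) * Rpower t (1 - al).
Proof.
  intros Hal Hc Hb Hd Hz Ht.
  assert (HM0 : 0 <= M0) by (specialize (Hb 0 ltac:(lra)); pose proof (Rabs_pos (F 0)); lra).
  assert (HBf : 0 <= Bf) by (apply (coef_nonneg (F 1) Bf (Rpower 1 (-al))); [apply Hd; lra|apply rp_pos]).
  assert (0 <= Bf / (al - 1)) by (apply Rmult_le_pos; [exact HBf|]; apply Rlt_le, Rinv_0_lt_compat; lra).
  pose proof (rp_pos t (1 - al)).
  destruct (Rle_dec t 1).
  - pose proof (Phi_small F M0 t Hc Hb ltac:(lra)).
    assert (t <= Rpower t (1 - al)).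
    { replace (1 - al) with (1 + - al) by ring. rewrite Rpower_plus, Rpower_1 by lra.
      assert (1 <= Rpower t (-al)).
      { rewrite Rpower_Ropp. rewrite <- Rinv_1. apply Rinv_le_contravar. apply rp_pos.
        rewrite <- (Rpower_base1 al). apply rp_incr; lra. }
      nra. }
    nra.
  - pose proof (Phi_large al F Bf t Hal Hc Hd Hz ltac:(lra)). nra.
Qed.



Lemma const_RInt (G : R -> R) K c d : ex_RInt G c d ->
  (d - c) * K - RInt G c d = RInt (fun u => K - G u) c d.
Proof.
  intros H.
  assert (E : RInt (fun u => minus ((fun _ : R => K) u) (G u)) c d = minus (RInt (fun _ : R => K) c d) (RInt G c d)).
  { apply (RInt_minus (V := R_CompleteNormedModule)); [apply (ex_RInt_const (V := R_NormedModule))|exact H]. }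
  rewrite (RInt_const (V := R_CompleteNormedModule)) in E. symmetry. exact E.
Qed.

Lemma tele_ineq a x : 0 < a -> 1 <= x -> a / (x + a) ^ 2 <= / x - / (x + a).
Proof.
  intros Ha Hx.
  replace (/ x - / (x + a)) with (a / (x * (x + a))) by (field; lra).
  unfold Rdiv. apply Rmult_le_compat_l; [lra|]. apply Rinv_le_contravar.
  { apply Rmult_lt_0_compat; lra. } simpl. nra.
Qed.

Definition Kh (al M1 Bf : R) := 4 * (M1 + Bf + Bf / (al - 1)).

Lemma hh_deriv (F : R -> R) (t : R) : (forall y, continuous F y) -> 0 < t ->
  is_derive (hh F) t ((t * F t - Phi F t) / t ^ 2).
Proof.
  intros Hc Ht. unfold hh.
  replace ((t * F t - Phi F t) / t ^ 2) with ((F t * t - Phi F t * 1) / t ^ 2) by (field; lra).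
  apply (is_derive_div (Phi F) (fun x => x) t (F t) 1).
  - apply Phi_deriv; exact Hc.
  - apply (is_derive_id (K := R_AbsRing)).
  - lra.
Qed.

Lemma hh_cont (F : R -> R) (t : R) : (forall y, continuous F y) -> 0 < t -> continuous (hh F) t.
Proof. intros Hc Ht. eapply exd_cont. apply hh_deriv; assumption. Qed.

Lemma hh_dbound al (F : R -> R) M1 Bf t : 1 < al -> (forall y, continuous F y) ->
  (forall s t, 0 <= s <= 1 -> 0 <= t <= 1 -> Rabs (F t - F s) <= M1 * Rabs (t - s)) ->
  (forall t, 1 <= t -> Rabs (F t) <= Bf * Rpower t (-al)) ->
  (forall eps, 0 < eps -> exists M, forall b, M < b -> Rabs (Phi F b) < eps) ->
  0 < t -> Rabs ((t * F t - Phi F t) / t ^ 2) <= Kh al M1 Bf / (1 + t) ^ 2.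
Proof.
  intros Hal Hc Hlip Hd Hz Ht.
  assert (HM1 : 0 <= M1).
  { apply (coef_nonneg (F 1 - F 0) M1 (Rabs (1 - 0))); [apply Hlip; lra|].
    rewrite Rminus_0_r, Rabs_R1; lra. }
  assert (HBf : 0 <= Bf) by (apply (coef_nonneg (F 1) Bf (Rpower 1 (-al))); [apply Hd; lra|apply rp_pos]).
  assert (HBp : 0 <= Bf / (al - 1)) by (apply Rmult_le_pos; [exact HBf|]; apply Rlt_le, Rinv_0_lt_compat; lra).
  assert (Ht2 : 0 < t ^ 2) by (simpl; nra).
  unfold Rdiv at 1. rewrite Rabs_mult, (Rabs_right (/ t ^ 2)) by (apply Rle_ge, Rlt_le, Rinv_0_lt_compat; lra).
  destruct (Rle_dec t 1) as [Ht1|Ht1].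
  - assert (E : t * F t - Phi F t = RInt (fun u => F t - F u) 0 t).
    { unfold Phi. rewrite <- const_RInt. ring. apply exR. intros; apply Hc. }
    assert (B : Rabs (t * F t - Phi F t) <= M1 * t * t).
    { rewrite E. replace (M1 * t * t) with ((t - 0) * (M1 * t)) by ring.
      apply abs_RInt_le_const; [lra| |].
      - apply exR. intros z _. apply (continuous_minus (V := R_NormedModule)); [apply continuous_const|apply Hc].
      - intros u Hu. eapply Rle_trans. apply Hlip; lra.
        apply Rmult_le_compat_l; [exact HM1|]. rewrite Rabs_right by lra. lra. }
    assert (Rabs (t * F t - Phi F t) * / t ^ 2 <= M1).
    { apply Rmult_le_reg_r with (t ^ 2); [exact Ht2|].
      rewrite Rmult_assoc, Rinv_l by lra. simpl. lra. }
    assert (M1 <= Kh al M1 Bf / (1 + t) ^ 2).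
    { unfold Kh. assert (0 < (1 + t) ^ 2) by (simpl; nra).
      apply Rmult_le_reg_r with ((1 + t) ^ 2); [lra|]. unfold Rdiv.
      rewrite Rmult_assoc, Rinv_l by lra. simpl.
      assert ((1 + t) * ((1 + t) * 1) <= 4) by nra.
      assert (M1 * ((1 + t) * ((1 + t) * 1)) <= M1 * 4) by (apply Rmult_le_compat_l; lra).
      unfold Rdiv in HBp. lra. }
    lra.
  - assert (B : Rabs (t * F t - Phi F t) <= Bf + Bf / (al - 1)).
    { unfold Rminus at 1. eapply Rle_trans. apply Rabs_triang. rewrite Rabs_Ropp.
      rewrite Rabs_mult, (Rabs_right t) by lra.
      pose proof (Hd t ltac:(lra)).
      pose proof (Phi_large al F Bf t Hal Hc Hd Hz ltac:(lra)).
      assert (Rpower t (1 - al) <= 1) by (apply rp_le1; lra).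
      assert (t * Rpower t (-al) = Rpower t (1 - al)).
      { replace (1 - al) with (1 + - al) by ring. rewrite Rpower_plus, Rpower_1; lra. }
      assert (t * Rabs (F t) <= Bf * Rpower t (1 - al)).
      { rewrite <- H2. replace (Bf * (t * Rpower t (-al))) with (t * (Bf * Rpower t (-al))) by ring.
        apply Rmult_le_compat_l; lra. }
      assert (Bf * Rpower t (1 - al) <= Bf) by (rewrite <- (Rmult_1_r Bf) at 2; apply Rmult_le_compat_l; lra).
      assert (Bf / (al - 1) * Rpower t (1 - al) <= Bf / (al - 1)) by (rewrite <- (Rmult_1_r (Bf / (al - 1))) at 2; apply Rmult_le_compat_l; lra).
      lra. }
    assert (Rabs (t * F t - Phi F t) * / t ^ 2 <= (Bf + Bf / (al - 1)) * / t ^ 2).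
    { apply Rmult_le_compat_r; [apply Rlt_le, Rinv_0_lt_compat; lra|exact B]. }
    assert ((Bf + Bf / (al - 1)) * / t ^ 2 <= Kh al M1 Bf / (1 + t) ^ 2).
    { assert (H0 : 0 < (1 + t) ^ 2) by (simpl; nra).
      assert (H1 : / t ^ 2 <= 4 * / (1 + t) ^ 2).
      { replace (4 * / (1 + t) ^ 2) with (/ ((1 + t) ^ 2 / 4)) by (field; lra).
        apply Rinv_le_contravar. { apply Rdiv_lt_0_compat; lra. } simpl. nra. }
      unfold Kh, Rdiv.
      apply Rle_trans with ((Bf + Bf / (al - 1)) * (4 * / (1 + t) ^ 2)).
      { apply Rmult_le_compat_l; [lra|exact H1]. }
      assert (0 < / (1 + t) ^ 2) by (apply Rinv_0_lt_compat; lra).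
      unfold Rdiv in HBp. nra. }
    lra.
Qed.

Definition FH (al : R) (F : R -> R) (M0 M1 Bf : R) : Prop :=
  (forall y, continuous F y) /\
  (forall t, 0 <= t <= 1 -> Rabs (F t) <= M0) /\
  (forall s t, 0 <= s <= 1 -> 0 <= t <= 1 -> Rabs (F t - F s) <= M1 * Rabs (t - s)) /\
  (forall t, 1 <= t -> Rabs (F t) <= Bf * Rpower t (-al)) /\
  (forall eps, 0 < eps -> exists M, forall b, M < b -> Rabs (Phi F b) < eps).

Lemma FH_nonneg al F M0 M1 Bf : 1 < al -> FH al F M0 M1 Bf ->
  0 <= M0 /\ 0 <= M1 /\ 0 <= Bf /\ 0 <= Bf / (al - 1) /\ 0 <= Kh al M1 Bf.
Proof.
  intros Hal [Hc [Hb [Hlip [Hd Hz]]]].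
  assert (HM0 : 0 <= M0) by (specialize (Hb 0 ltac:(lra)); pose proof (Rabs_pos (F 0)); lra).
  assert (HM1 : 0 <= M1).
  { apply (coef_nonneg (F 1 - F 0) M1 (Rabs (1 - 0))); [apply Hlip; lra|].
    rewrite Rminus_0_r, Rabs_R1; lra. }
  assert (HBf : 0 <= Bf) by (apply (coef_nonneg (F 1) Bf (Rpower 1 (-al))); [apply Hd; lra|apply rp_pos]).
  assert (HBp : 0 <= Bf / (al - 1)) by (apply Rmult_le_pos; [exact HBf|]; apply Rlt_le, Rinv_0_lt_compat; lra).
  repeat split; try assumption. unfold Kh. lra.
Qed.

Lemma hh_lip al F M0 M1 Bf s t : 1 < al -> FH al F M0 M1 Bf -> 0 < s <= t ->
  Rabs (hh F t - hh F s) <= Kh al M1 Bf / (1 + s) ^ 2 * (t - s).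
Proof.
  intros Hal HF Hst. pose proof (FH_nonneg al F M0 M1 Bf Hal HF) as [_ [_ [_ [_ HK]]]].
  destruct HF as [Hc [Hb [Hlip [Hd Hz]]]].
  destruct (MVT_gen (hh F) s t (fun u => (u * F u - Phi F u) / u ^ 2)) as [c [Hc1 Heq]].
  - intros x Hx. rewrite Rmin_left, Rmax_right in Hx by lra. apply hh_deriv; [exact Hc|lra].
  - intros x Hx. rewrite Rmin_left, Rmax_right in Hx by lra. apply continuity_pt_filterlim.
    apply hh_cont; [exact Hc|lra].
  - rewrite Rmin_left, Rmax_right in Hc1 by lra. cbv beta in Heq. rewrite Heq.
    rewrite Rabs_mult, (Rabs_right (t - s)) by lra.
    apply Rmult_le_compat_r; [lra|].
    eapply Rle_trans. apply (hh_dbound al F M1 Bf c Hal Hc Hlip Hd Hz); lra.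
    unfold Rdiv. apply Rmult_le_compat_l; [exact HK|]. apply Rinv_le_contravar.
    + simpl; nra.
    + simpl; nra.
Qed.

Lemma hh_small F M0 t : (forall y, continuous F y) -> (forall t, 0 <= t <= 1 -> Rabs (F t) <= M0) ->
  0 < t <= 1 -> Rabs (hh F t) <= M0.
Proof.
  intros Hc Hb Ht. unfold hh. unfold Rdiv. rewrite Rabs_mult, Rabs_inv, (Rabs_right t) by lra.
  pose proof (Phi_small F M0 t Hc Hb ltac:(lra)).
  apply Rmult_le_reg_r with t; [lra|]. rewrite Rmult_assoc, Rinv_l by lra. lra.
Qed.

Lemma hh_large al F M0 M1 Bf t : 1 < al -> FH al F M0 M1 Bf -> 1 <= t ->
  Rabs (hh F t) <= Bf / (al - 1) * Rpower t (-al).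
Proof.
  intros Hal [Hc [Hb [Hlip [Hd Hz]]]] Ht. unfold hh. unfold Rdiv at 1.
  rewrite Rabs_mult, Rabs_inv, (Rabs_right t) by lra.
  pose proof (Phi_large al F Bf t Hal Hc Hd Hz Ht).
  replace (Rpower t (-al)) with (Rpower t (1 - al) / t).
  2:{ rewrite <- rp_shift by lra. f_equal; ring. }
  unfold Rdiv. rewrite <- Rmult_assoc. apply Rmult_le_compat_r; [apply Rlt_le, Rinv_0_lt_compat; lra|exact H].
Qed.

Lemma INR_p1 n : INR (n + 1) = INR n + 1.
Proof. rewrite plus_INR. reflexivity. Qed.

Lemma rsum al F M0 M1 Bf a : 1 < al -> FH al F M0 M1 Bf -> 0 < a -> forall N,
  Rabs (sumN (fun n => a * hh F (INR (n + 1) * a)) N - RInt (hh F) a (INR (N + 1) * a))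
  <= Kh al M1 Bf * a * (1 - / (1 + INR N * a)).
Proof.
  intros Hal HF Ha. pose proof (FH_nonneg al F M0 M1 Bf Hal HF) as [_ [_ [_ [_ HK]]]].
  pose proof HF as [Hc _].
  induction N.
  - rewrite INR_p1. replace (INR 0) with 0 by reflexivity.
    replace (0 + 1) with 1 by ring. rewrite Rmult_1_l, Rmult_0_l, Rplus_0_r, Rinv_1.
    rewrite (RInt_point (V := R_CompleteNormedModule)).
    change (sumN (fun n : nat => a * hh F (INR (n + 1) * a)) 0) with 0.
    match goal with |- Rabs (0 - ?z) <= _ => replace z with 0 by reflexivity end.
    rewrite Rminus_0_r, Rabs_R0. lra.
  - set (c := INR (N + 1) * a) in *.
    assert (Hc0 : 0 < c) by (unfold c; rewrite INR_p1; pose proof (pos_INR N); nra).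
    assert (E1 : INR (S N + 1) * a = c + a) by (unfold c; rewrite !INR_p1, S_INR; ring).
    rewrite E1, sumN_S.
    assert (Hex : forall u v, 0 < u -> 0 < v -> ex_RInt (hh F) u v).
    { intros u v Hu Hv. apply exR. intros z Hz. apply hh_cont; [exact Hc|].
      apply Rlt_le_trans with (Rmin u v); [apply Rmin_case; lra|lra]. }
    rewrite <- (RInt_Chasles (V := R_CompleteNormedModule) (hh F) a c (c + a)) by (apply Hex; lra).
    change (plus (RInt (hh F) a c) (RInt (hh F) c (c + a))) with (RInt (hh F) a c + RInt (hh F) c (c + a)).
    assert (T : Rabs (a * hh F c - RInt (hh F) c (c + a)) <= a * (Kh al M1 Bf / (1 + c) ^ 2 * a)).
    { replace (a * hh F c) with ((c + a - c) * hh F c) by ring.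
      rewrite const_RInt by (apply Hex; lra).
      apply Rle_trans with ((c + a - c) * (Kh al M1 Bf / (1 + c) ^ 2 * a)); [|right; ring].
      apply abs_RInt_le_const; [lra| |].
      - apply exR. intros z Hz. rewrite Rmin_left, Rmax_right in Hz by lra.
        apply (continuous_minus (V := R_NormedModule)); [apply continuous_const|apply hh_cont; [exact Hc|lra]].
      - intros u Hu. rewrite Rabs_minus_sym. eapply Rle_trans. apply (hh_lip al F M0 M1 Bf c u Hal HF); lra.
        apply Rmult_le_compat_l; [|lra]. unfold Rdiv. apply Rmult_le_pos; [exact HK|].
        apply Rlt_le, Rinv_0_lt_compat. simpl; nra. }
    set (E := sumN (fun n : nat => a * hh F (INR (n + 1) * a)) N - RInt (hh F) a c) in IHN.
    replace (sumN (fun n : nat => a * hh F (INR (n + 1) * a)) N + a * hh F (INR (N + 1) * a) -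
      (RInt (hh F) a c + RInt (hh F) c (c + a))) with (E + (a * hh F c - RInt (hh F) c (c + a))).
    2:{ unfold E, c. ring. }
    eapply Rle_trans. apply Rabs_triang.
    assert (Hx : 1 + c = (1 + INR N * a) + a) by (unfold c; rewrite INR_p1; ring).
    pose proof (tele_ineq a (1 + INR N * a) Ha ltac:(pose proof (pos_INR N); nra)) as TI.
    rewrite <- Hx in TI. rewrite S_INR.
    replace (1 + (INR N + 1) * a) with (1 + c) by (unfold c; rewrite INR_p1; ring).
    assert (Kh al M1 Bf * a * (a / (1 + c) ^ 2) <= Kh al M1 Bf * a * (/ (1 + INR N * a) - / (1 + c))).
    { apply Rmult_le_compat_l; [nra|exact TI]. }
    replace (a * (Kh al M1 Bf / (1 + c) ^ 2 * a)) with (Kh al M1 Bf * a * (a / (1 + c) ^ 2)) in T by (unfold Rdiv; ring).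
    rewrite Rmult_minus_distr_l in IHN, H |- *. lra.
Qed.

Lemma hh_ex F u v : (forall y, continuous F y) -> 0 < u -> 0 < v -> ex_RInt (hh F) u v.
Proof.
  intros Hc Hu Hv. apply exR. intros z Hz. apply hh_cont; [exact Hc|].
  apply Rlt_le_trans with (Rmin u v); [apply Rmin_case; lra|lra].
Qed.

Lemma Lh_exists al F M0 M1 Bf : 1 < al -> FH al F M0 M1 Bf ->
  exists Lh, forall eps, 0 < eps -> exists d M, 0 < d /\ 0 < M /\
      forall a b, 0 < a -> a < d -> M < b -> Rabs (RInt (hh F) a b - Lh) < eps.
Proof.
  intros Hal HF. pose proof (FH_nonneg al F M0 M1 Bf Hal HF) as [HM0 [_ [_ [HBp _]]]].
  pose proof HF as [Hc [Hb _]].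
  apply cauchy2. intros eps He.
  set (Bp := Bf / (al - 1)) in *.
  destruct (rp_small (eps / 4 * (al - 1) / (Bp + 1)) (1 - al)) as [Y [HY HYy]].
  { apply Rdiv_lt_0_compat; [|lra]. apply Rmult_lt_0_compat; lra. } { lra. }
  set (M := Rmax 1 Y). set (d := Rmin 1 (eps / (4 * (M0 + 1)))).
  assert (HM1 : 1 <= M) by apply Rmax_l.
  assert (HMY : Y <= M) by apply Rmax_r.
  assert (Hd0 : 0 < d) by (unfold d; apply Rmin_case; [lra|apply Rdiv_lt_0_compat; lra]).
  assert (Hd1 : d <= 1) by apply Rmin_l.
  assert (Hd2 : d <= eps / (4 * (M0 + 1))) by apply Rmin_r.
  exists d, M. split; [exact Hd0|]. split; [lra|].
  intros a b a' b' Ha Had Ha' Ha'd Hb' Hb''.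
  assert (E : RInt (hh F) a b - RInt (hh F) a' b' = RInt (hh F) a a' + (RInt (hh F) M b - RInt (hh F) M b')).
  { rewrite <- (RInt_Chasles (V := R_CompleteNormedModule) (hh F) a a' b) by (apply hh_ex; try exact Hc; lra).
    rewrite <- (RInt_Chasles (V := R_CompleteNormedModule) (hh F) a' M b) by (apply hh_ex; try exact Hc; lra).
    rewrite <- (RInt_Chasles (V := R_CompleteNormedModule) (hh F) a' M b') by (apply hh_ex; try exact Hc; lra).
    repeat change (plus ?x ?y) with (x + y). ring. }
  rewrite E.
  assert (T1 : Rabs (RInt (hh F) a a') <= Rabs (a' - a) * M0).
  { apply abs_RInt_const2.
    - intros z Hz. apply hh_cont; [exact Hc|]. apply Rlt_le_trans with (Rmin a a'); [apply Rmin_case; lra|lra].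
    - intros z Hz. apply (hh_small F M0 z Hc Hb). split.
      + apply Rlt_le_trans with (Rmin a a'); [apply Rmin_case; lra|lra].
      + apply Rle_trans with (Rmax a a'); [lra|]. apply Rmax_case; lra. }
  assert (Hint : forall bb, M < bb -> Rabs (RInt (hh F) M bb) < eps / 4).
  { intros bb Hbb. eapply Rle_lt_trans.
    - apply (int_decay al (hh F) Bp M bb Hal ltac:(lra)).
      + intros z Hz. apply hh_cont; [exact Hc|lra].
      + intros z Hz. apply (hh_large al F M0 M1 Bf z Hal HF). lra.
    - pose proof (HYy M HMY). pose proof (rp_pos M (1 - al)).
      assert (Bp * Rpower M (1 - al) < eps / 4 * (al - 1)).
      { apply Rle_lt_trans with ((Bp + 1) * Rpower M (1 - al)). { nra. }
        replace (eps / 4 * (al - 1)) with ((Bp + 1) * (eps / 4 * (al - 1) / (Bp + 1))) by (field; lra).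
        apply Rmult_lt_compat_l; lra. }
      apply Rmult_lt_reg_r with (al - 1); [lra|].
      replace (Bp * Rpower M (1 - al) / (al - 1) * (al - 1)) with (Bp * Rpower M (1 - al)) by (field; lra).
      lra. }
  pose proof (Hint b Hb'). pose proof (Hint b' Hb'').
  assert (Rabs (a' - a) * M0 <= eps / 4).
  { apply Rle_trans with (d * M0). { apply Rmult_le_compat_r; [lra|]. apply Rabs_le; lra. }
    apply Rle_trans with (eps / (4 * (M0 + 1)) * M0). { apply Rmult_le_compat_r; lra. }
    unfold Rdiv. rewrite Rinv_mult.
    apply Rle_trans with (eps * / 4 * (/ (M0 + 1) * (M0 + 1))).
    - rewrite !Rmult_assoc. apply Rmult_le_compat_l; [lra|]. apply Rmult_le_compat_l; [lra|].
      apply Rmult_le_compat_l; [apply Rlt_le, Rinv_0_lt_compat; lra|lra].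
    - rewrite Rinv_l by lra. lra. }
  pose proof (Rabs_triang (RInt (hh F) a a') (RInt (hh F) M b - RInt (hh F) M b')) as T2.
  pose proof (Rabs_triang (RInt (hh F) M b) (- RInt (hh F) M b')) as T3. rewrite Rabs_Ropp in T3.
  unfold Rminus at 2 in T2. lra.
Qed.

Lemma A_lim al F M0 M1 Bf Lh : 1 < al -> FH al F M0 M1 Bf ->
  (forall eps, 0 < eps -> exists d M, 0 < d /\ 0 < M /\
      forall a b, 0 < a -> a < d -> M < b -> Rabs (RInt (hh F) a b - Lh) < eps) ->
  forall eps, 0 < eps -> exists del, 0 < del /\ forall a Aa, 0 < a < del ->
    infinite_sum (fun n => Phi F (INR (n + 1) * a) / INR (n + 1)) Aa -> Rabs (Aa - Lh) < eps.
Proof.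
  intros Hal HF HL eps He. pose proof (FH_nonneg al F M0 M1 Bf Hal HF) as [_ [_ [_ [_ HK]]]].
  destruct (HL (eps / 3) ltac:(lra)) as [d [M [Hd [HM HdM]]]].
  set (del := Rmin d (eps / (3 * (Kh al M1 Bf + 1)))).
  exists del. split. { unfold del; apply Rmin_case; [lra|apply Rdiv_lt_0_compat; lra]. }
  intros a Aa [Ha Hadel] Hs.
  assert (Had : a < d) by (pose proof (Rmin_l d (eps / (3 * (Kh al M1 Bf + 1)))); unfold del in *; lra).
  assert (Hae : a < eps / (3 * (Kh al M1 Bf + 1))) by (pose proof (Rmin_r d (eps / (3 * (Kh al M1 Bf + 1)))); unfold del in *; lra).
  destruct (proj1 (isum_sumN _ _) Hs (eps / 3) ltac:(lra)) as [N1 HN1].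
  destruct (INR_unbounded (M / a)) as [N2 HN2].
  set (N := Nat.max N1 N2).
  specialize (HN1 N ltac:(unfold N; lia)).
  assert (HNa : M < INR (N + 1) * a).
  { rewrite INR_p1. assert (INR N2 <= INR N) by (apply le_INR; unfold N; lia).
    apply Rmult_lt_reg_r with (/ a); [apply Rinv_0_lt_compat; lra|].
    rewrite Rmult_assoc, Rinv_r, Rmult_1_r by lra. unfold Rdiv in HN2. lra. }
  specialize (HdM a (INR (N + 1) * a) Ha Had HNa).
  pose proof (rsum al F M0 M1 Bf a Hal HF Ha N) as RS.
  assert (ES : sumN (fun n => Phi F (INR (n + 1) * a) / INR (n + 1)) N = sumN (fun n => a * hh F (INR (n + 1) * a)) N).
  { apply sumN_ext. intros i _. unfold hh. rewrite INR_p1. pose proof (pos_INR i). field. split; lra. }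
  rewrite ES in HN1.
  assert (Kh al M1 Bf * a * (1 - / (1 + INR N * a)) <= Kh al M1 Bf * a).
  { assert (0 < / (1 + INR N * a)) by (apply Rinv_0_lt_compat; pose proof (pos_INR N); nra).
    assert (0 <= Kh al M1 Bf * a) by nra. nra. }
  assert (Kh al M1 Bf * a < eps / 3).
  { apply Rle_lt_trans with ((Kh al M1 Bf + 1) * a). { nra. }
    apply Rmult_lt_compat_l with (r := Kh al M1 Bf + 1) in Hae; [|lra].
    replace ((Kh al M1 Bf + 1) * (eps / (3 * (Kh al M1 Bf + 1)))) with (eps / 3) in Hae by (field; lra). lra. }
  set (S := sumN (fun n : nat => a * hh F (INR (n + 1) * a)) N) in *.
  set (I := RInt (hh F) a (INR (N + 1) * a)) in *.
  pose proof (Rabs_triang (Aa - S) (S - I)). pose proof (Rabs_triang (Aa - S + (S - I)) (I - Lh)).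
  replace (Aa - S + (S - I) + (I - Lh)) with (Aa - Lh) in H2 by ring.
  rewrite Rabs_minus_sym in HN1. lra.
Qed.



Lemma RInt_dil (G : R -> R) c a b : 0 < c -> ex_RInt G (c * a) (c * b) ->
  RInt (fun y => G (c * y)) a b = RInt G (c * a) (c * b) / c.
Proof.
  intros Hc Hex.
  assert (Hex' : ex_RInt G (c * a + 0) (c * b + 0)) by (rewrite !Rplus_0_r; exact Hex).
  pose proof (RInt_comp_lin (V := R_CompleteNormedModule) G c 0 a b Hex') as E.
  pose proof (ex_RInt_comp_lin (V := R_CompleteNormedModule) G c 0 a b Hex') as Hex2.
  assert (E3 : RInt (fun y => G (c * y)) a b = RInt (fun y => scal (/ c) (scal c (G (c * y + 0)))) a b).
  { apply RInt_ext. intros x _. rewrite Rplus_0_r.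
    replace (G (c * x)) with (/ c * (c * G (c * x))) at 1 by (field; lra). reflexivity. }
  pose proof (RInt_scal (V := R_CompleteNormedModule) _ a b (/ c) Hex2) as E5.
  rewrite E3. refine (eq_trans E5 _). refine (eq_trans (f_equal (scal (/ c)) E) _).
  rewrite !Rplus_0_r. change (/ c * RInt G (c * a) (c * b) = RInt G (c * a) (c * b) / c).
  unfold Rdiv. ring.
Qed.

Lemma ex_sumN (G : nat -> R -> R) a b N : (forall n, ex_RInt (G n) a b) ->
  ex_RInt (fun y => sumN (fun n => G n y) N) a b.
Proof.
  intros H. induction N.
  - change (ex_RInt (fun _ : R => 0) a b). apply (ex_RInt_const (V := R_NormedModule)).
  - change (ex_RInt (fun y => plus (sumN (fun n => G n y) N) (G N y)) a b).
    apply (ex_RInt_plus (V := R_NormedModule) (fun y => sumN (fun n => G n y) N) (G N)); [exact IHN|apply H].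
Qed.

Lemma RInt_sumN (G : nat -> R -> R) a b N : (forall n, ex_RInt (G n) a b) ->
  RInt (fun y => sumN (fun n => G n y) N) a b = sumN (fun n => RInt (G n) a b) N.
Proof.
  intros H. induction N.
  - change (RInt (fun _ : R => 0) a b = 0). rewrite (RInt_const (V := R_CompleteNormedModule)).
    change ((b - a) * 0 = 0). ring.
  - rewrite sumN_S. rewrite <- IHN.
    pose proof (RInt_plus (V := R_CompleteNormedModule) (fun y => sumN (fun n => G n y) N) (G N) a b
      (ex_sumN G a b N H) (H N)) as E.
    exact E.
Qed.


Lemma cont_dil (F : R -> R) (c y : R) : (forall z, continuous F z) -> continuous (fun t => F (c * t)) y.
Proof.
  intros Hc. apply (continuous_comp (fun t => c * t) F).
  - apply (exd_cont _ _ (c * 1)). apply (is_derive_scal (fun t => t) y c 1).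
    apply (is_derive_id (K := R_AbsRing)).
  - apply Hc.
Qed.

Lemma term_bound al B (F : R -> R) a y n : 0 < a <= y ->
  (forall t, a <= t -> Rabs (F t) <= B * Rpower t (-al)) -> 0 <= al ->
  Rabs (F (INR (n + 1) * y)) <= B * Rpower a (-al) * qq al n.
Proof.
  intros Hay HB Hal. pose proof (pos_INR n).
  assert (HB0 : 0 <= B) by (apply (coef_nonneg (F a) B (Rpower a (-al))); [apply HB; lra|apply rp_pos]).
  eapply Rle_trans. { apply HB. rewrite INR_p1. nra. }
  rewrite INR_p1, rp_mul by lra. unfold qq.
  assert (Rpower y (-al) <= Rpower a (-al)) by (apply rp_decr; lra).
  pose proof (rp_pos (INR n + 1) (-al)).
  replace (B * (Rpower (INR n + 1) (- al) * Rpower y (- al))) with ((B * Rpower (INR n + 1) (- al)) * Rpower y (- al)) by ring.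
  replace (B * Rpower a (- al) * Rpower (INR n + 1) (- al)) with ((B * Rpower (INR n + 1) (- al)) * Rpower a (- al)) by ring.
  apply Rmult_le_compat_l; [|lra]. apply Rmult_le_pos; lra.
Qed.

Lemma g_int al F M0 M1 Bf (g : R -> R) a b : 1 < al -> FH al F M0 M1 Bf ->
  (forall y, 0 < y -> continuous g y) ->
  (forall y, 0 < y -> infinite_sum (fun n => F (INR (n + 1) * y)) (g y)) ->
  0 < a <= b ->
  infinite_sum (fun n => (Phi F (INR (n + 1) * b) - Phi F (INR (n + 1) * a)) / INR (n + 1)) (RInt g a b).
Proof.
  intros Hal HF Hgc Hsum Hab. destruct HF as [Hc [Hb [Hlip [Hd Hz0]]]].
  destruct (decay_glob F al Bf 1 a ltac:(lra) ltac:(lra) ltac:(lra) (fun z _ => Hc z) Hd) as [B [HB HBd]].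
  set (K := B * Rpower a (-al)).
  assert (HK : 0 <= K) by (unfold K; pose proof (rp_pos a (-al)); nra).
  assert (Tail : forall y N, a <= y -> (1 <= N)%nat ->
     Rabs (g y - sumN (fun n => F (INR (n + 1) * y)) N) <= K * (Rpower (INR N) (1 - al) / (al - 1))).
  { intros y N Hy HN. apply (isum_tail _ _ (fun n => K * qq al n)).
    - apply Hsum; lra.
    - intros n. apply (term_bound al B F a y n); lra || (intros; apply HBd; lra).
    - intros M. rewrite sumN_ind_scal. apply Rmult_le_compat_l; [exact HK|]. apply tail_qq; assumption. }
  assert (Hex : forall n, ex_RInt (fun y => F (INR (n + 1) * y)) a b).
  { intros n. apply exR. intros z _. apply cont_dil. exact Hc. }
  assert (Hpart : forall N, sumN (fun n => (Phi F (INR (n + 1) * b) - Phi F (INR (n + 1) * a)) / INR (n + 1)) N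
                  = RInt (fun y => sumN (fun n => F (INR (n + 1) * y)) N) a b).
  { intros N. rewrite (RInt_sumN (fun n y => F (INR (n + 1) * y))) by exact Hex.
    apply sumN_ext. intros n _. assert (Hn : 0 < INR (n + 1)) by (rewrite INR_p1; pose proof (pos_INR n); lra).
    rewrite (RInt_dil F (INR (n + 1)) a b Hn) by (apply exR; intros; apply Hc).
    rewrite <- Phi_diff by exact Hc. reflexivity. }
  apply isum_sumN. intros eps He.
  destruct (rp_small (eps * (al - 1) / ((b - a) * K + 1)) (1 - al)) as [Y [HY HYy]].
  { apply Rdiv_lt_0_compat; [nra|]. nra. } { lra. }
  destruct (INR_unbounded Y) as [N0 HN0].
  exists (S N0). intros n Hn. rewrite Hpart.
  assert (Hexg : ex_RInt g a b) by (apply exR; intros z Hz; apply Hgc; rewrite Rmin_left in Hz by lra; lra).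
  pose proof (RInt_minus (V := R_CompleteNormedModule) g (fun y => sumN (fun n => F (INR (n + 1) * y)) n) a b
     Hexg (ex_sumN _ a b n Hex)) as E.
  assert (E' : RInt (fun y => sumN (fun n0 => F (INR (n0 + 1) * y)) n) a b - RInt g a b =
    - RInt (fun y => g y - sumN (fun n0 => F (INR (n0 + 1) * y)) n) a b).
  { assert (E'' : RInt (fun y => g y - sumN (fun n0 => F (INR (n0 + 1) * y)) n) a b =
       RInt g a b - RInt (fun y => sumN (fun n0 => F (INR (n0 + 1) * y)) n) a b) by exact E.
    rewrite E''. ring. }
  rewrite E', Rabs_Ropp.
  assert (HnR : Y < INR n) by (apply Rlt_le_trans with (INR N0); [exact HN0|apply le_INR; lia]).
  specialize (HYy (INR n) ltac:(lra)).
  eapply Rle_lt_trans.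
  - apply (abs_RInt_le_const _ a b (K * (Rpower (INR n) (1 - al) / (al - 1)))); [lra| |].
    + apply (ex_RInt_minus (V := R_NormedModule)); [exact Hexg|apply ex_sumN; exact Hex].
    + intros t Ht. apply Tail; [lra|lia].
  - pose proof (rp_pos (INR n) (1 - al)).
    set (P := Rpower (INR n) (1 - al)) in *.
    assert (HbaK : 0 <= (b - a) * K) by nra.
    assert ((b - a) * K * P < eps * (al - 1)).
    { apply Rle_lt_trans with (((b - a) * K + 1) * P). { nra. }
      replace (eps * (al - 1)) with (((b - a) * K + 1) * (eps * (al - 1) / ((b - a) * K + 1))) by (field; lra).
      apply Rmult_lt_compat_l; lra. }
    replace ((b - a) * (K * (P / (al - 1)))) with ((b - a) * K * P / (al - 1)) by (field; lra).
    apply Rmult_lt_reg_r with (al - 1); [lra|].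
    replace ((b - a) * K * P / (al - 1) * (al - 1)) with ((b - a) * K * P) by (field; lra). lra.
Qed.

Lemma isum_ext u v l : (forall n, u n = v n) -> infinite_sum u l -> infinite_sum v l.
Proof.
  intros He Hs. apply isum_sumN. intros eps Hep. destruct (proj1 (isum_sumN u l) Hs eps Hep) as [N HN].
  exists N. intros n Hn. rewrite <- (sumN_ext u v n) by (intros; apply He). apply HN; exact Hn.
Qed.

Lemma isum_minus u v lu lv : infinite_sum u lu -> infinite_sum v lv ->
  infinite_sum (fun n => u n - v n) (lu - lv).
Proof.
  intros Hu Hv. apply isum_sumN. intros eps Hep.
  destruct (proj1 (isum_sumN u lu) Hu (eps / 2) ltac:(lra)) as [N1 H1].
  destruct (proj1 (isum_sumN v lv) Hv (eps / 2) ltac:(lra)) as [N2 H2].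
  exists (Nat.max N1 N2). intros n Hn. rewrite sumN_minus.
  specialize (H1 n ltac:(lia)). specialize (H2 n ltac:(lia)).
  pose proof (Rabs_triang (sumN u n - lu) (- (sumN v n - lv))). rewrite Rabs_Ropp in H.
  replace (sumN u n - lu + - (sumN v n - lv)) with (sumN u n - sumN v n - (lu - lv)) in H by ring. lra.
Qed.

Lemma A_term al F M0 M1 Bf c n : 1 < al -> FH al F M0 M1 Bf -> 0 < c ->
  Rabs (Phi F (INR (n + 1) * c) / INR (n + 1)) <= (M0 + Bf / (al - 1)) * Rpower c (1 - al) * qq al n.
Proof.
  intros Hal HF Hc0. pose proof (FH_nonneg al F M0 M1 Bf Hal HF) as [HM0 [_ [_ [HBp _]]]].
  destruct HF as [Hc [Hb [Hlip [Hd Hz]]]].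
  assert (Hn : 0 < INR (n + 1)) by (rewrite INR_p1; pose proof (pos_INR n); lra).
  pose proof (Phi_global al F M0 Bf (INR (n + 1) * c) Hal Hc Hb Hd Hz ltac:(nra)) as H.
  unfold Rdiv. rewrite Rabs_mult, Rabs_inv, (Rabs_right (INR (n + 1))) by lra.
  rewrite rp_mul in H by lra.
  assert (E : Rpower (INR (n + 1)) (1 - al) * / INR (n + 1) = qq al n).
  { unfold qq. rewrite <- INR_p1. replace (-al) with (1 - al - 1) by ring. rewrite rp_shift by lra. reflexivity. }
  apply Rle_trans with ((M0 + Bf / (al - 1)) * (Rpower (INR (n + 1)) (1 - al) * Rpower c (1 - al)) * / INR (n + 1)).
  { apply Rmult_le_compat_r; [apply Rlt_le, Rinv_0_lt_compat; lra|exact H]. }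
  rewrite <- E. apply Req_le. unfold Rdiv. ring.
Qed.

Lemma A_exists al F M0 M1 Bf c : 1 < al -> FH al F M0 M1 Bf -> 0 < c ->
  exists Ac, infinite_sum (fun n => Phi F (INR (n + 1) * c) / INR (n + 1)) Ac.
Proof.
  intros Hal HF Hc. apply (isum_exists al _ ((M0 + Bf / (al - 1)) * Rpower c (1 - al)) Hal).
  intros n. apply (A_term al F M0 M1 Bf); assumption.
Qed.

Lemma A_bound al F M0 M1 Bf c Ac : 1 < al -> FH al F M0 M1 Bf -> 0 < c ->
  infinite_sum (fun n => Phi F (INR (n + 1) * c) / INR (n + 1)) Ac ->
  Rabs Ac <= (M0 + Bf / (al - 1)) * Rpower c (1 - al) * Zc al.
Proof.
  intros Hal HF Hc Hs. pose proof (FH_nonneg al F M0 M1 Bf Hal HF) as [HM0 [_ [_ [HBp _]]]].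
  apply (isum_bound _ _ (fun n => (M0 + Bf / (al - 1)) * Rpower c (1 - al) * qq al n) _ Hs).
  - intros n. apply (A_term al F M0 M1 Bf); assumption.
  - intros M. rewrite sumN_scal. apply Rmult_le_compat_l.
    + pose proof (rp_pos c (1 - al)). nra.
    + apply total_qq; exact Hal.
Qed.

Lemma g_improper al F M0 M1 Bf (g : R -> R) Lh : 1 < al -> FH al F M0 M1 Bf ->
  (forall y, 0 < y -> continuous g y) ->
  (forall y, 0 < y -> infinite_sum (fun n => F (INR (n + 1) * y)) (g y)) ->
  (forall eps, 0 < eps -> exists d M, 0 < d /\ 0 < M /\
      forall a b, 0 < a -> a < d -> M < b -> Rabs (RInt (hh F) a b - Lh) < eps) ->
  improper_int g (- Lh).
Proof.
  intros Hal HF Hgc Hsum HL.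
  pose proof (FH_nonneg al F M0 M1 Bf Hal HF) as [HM0 [_ [_ [HBp _]]]].
  apply mk_improper.
  - intros a b Ha Hab. apply exR. intros z Hz. apply Hgc. rewrite Rmin_left in Hz by lra. lra.
  - intros eps He.
    destruct (A_lim al F M0 M1 Bf Lh Hal HF HL (eps / 2) ltac:(lra)) as [del [Hdel HA]].
    set (G := (M0 + Bf / (al - 1)) * Zc al).
    assert (HZ : 0 < Zc al) by (unfold Zc; assert (0 < 1 / (al - 1)) by (apply Rdiv_lt_0_compat; lra); lra).
    assert (HG : 0 <= G) by (unfold G; nra).
    destruct (rp_small (eps / 2 / (G + 1)) (1 - al)) as [Y [HY HYy]].
    { apply Rdiv_lt_0_compat; lra. } { lra. }
    exists (Rmin del 1), (Rmax Y 1 + 1). split; [apply Rmin_case; lra|]. split; [pose proof (Rmax_r Y 1); lra|].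
    intros a b Ha Had Hb.
    pose proof (Rmin_l del 1). pose proof (Rmin_r del 1). pose proof (Rmax_l Y 1). pose proof (Rmax_r Y 1).
    destruct (A_exists al F M0 M1 Bf a Hal HF Ha) as [Aa HAa].
    destruct (A_exists al F M0 M1 Bf b Hal HF ltac:(lra)) as [Ab HAb].
    pose proof (g_int al F M0 M1 Bf g a b Hal HF Hgc Hsum ltac:(lra)) as Hgi.
    pose proof (isum_minus _ _ _ _ HAb HAa) as Hd.
    assert (Hd' : infinite_sum (fun n => (Phi F (INR (n + 1) * b) - Phi F (INR (n + 1) * a)) / INR (n + 1)) (Ab - Aa)).
    { eapply isum_ext; [|exact Hd]. intros n. cbv beta. unfold Rdiv. ring. }
    rewrite (uniqueness_sum _ _ _ Hgi Hd').
    specialize (HA a Aa ltac:(lra) HAa).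
    pose proof (A_bound al F M0 M1 Bf b Ab Hal HF ltac:(lra) HAb) as HAbb.
    assert (Rabs Ab < eps / 2).
    { eapply Rle_lt_trans; [exact HAbb|]. specialize (HYy b ltac:(lra)). pose proof (rp_pos b (1 - al)).
      replace ((M0 + Bf / (al - 1)) * Rpower b (1 - al) * Zc al) with (G * Rpower b (1 - al)) by (unfold G; ring).
      apply Rle_lt_trans with ((G + 1) * Rpower b (1 - al)). { nra. }
      replace (eps / 2) with ((G + 1) * (eps / 2 / (G + 1))) by (field; lra).
      apply Rmult_lt_compat_l; lra. }
    replace (Ab - Aa - - Lh) with (Ab - (Aa - Lh)) by ring.
    pose proof (Rabs_triang Ab (- (Aa - Lh))). rewrite Rabs_Ropp in H4. unfold Rminus at 1. lra.
Qed.



Lemma cont_mult (f g : R -> R) (x : R) : continuous f x -> continuous g x -> continuous (fun t => f t * g t) x.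
Proof.
  intros Hf Hg. apply continuity_pt_filterlim. apply continuity_pt_mult; apply continuity_pt_filterlim; assumption.
Qed.

Lemma cont_plus (f g : R -> R) (x : R) : continuous f x -> continuous g x -> continuous (fun t => f t + g t) x.
Proof.
  intros Hf Hg. apply continuity_pt_filterlim. apply continuity_pt_plus; apply continuity_pt_filterlim; assumption.
Qed.

Lemma ln_lt_self y : 0 < y -> ln y < y.
Proof.
  intros Hy. pose proof (exp_ineq1_le (ln y)). rewrite exp_ln in H by lra. lra.
Qed.

Lemma lnpow_small c K : c < 0 -> 0 <= K -> forall eps, 0 < eps ->
  exists Y, 1 <= Y /\ forall b, Y <= b -> (ln b + K) * Rpower b c < eps.
Proof.
  intros Hc HK eps He. set (e := - c / 2).
  assert (He0 : 0 < e) by (unfold e; lra).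
  destruct (rp_small (eps / (/ e + K + 1)) (c / 2)) as [Y [HY HYy]].
  { apply Rdiv_lt_0_compat; [lra|]. pose proof (Rinv_0_lt_compat e He0). lra. } { lra. }
  exists (Rmax 1 Y). split; [apply Rmax_l|]. intros b Hb.
  pose proof (Rmax_l 1 Y). pose proof (Rmax_r 1 Y).
  assert (Hb1 : 1 <= b) by lra.
  assert (Hln0 : 0 <= ln b) by (destruct (Req_dec b 1) as [->|]; [rewrite ln_1; lra|left; rewrite <- ln_1; apply ln_increasing; lra]).
  assert (Hln : ln b <= Rpower b e / e).
  { unfold Rpower. pose proof (exp_ineq1_le (e * ln b)).
    apply Rmult_le_reg_r with e; [lra|]. unfold Rdiv. rewrite Rmult_assoc, Rinv_l by lra. nra. }
  assert (E : Rpower b e * Rpower b c = Rpower b (c / 2)).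
  { rewrite <- Rpower_plus. f_equal. unfold e. field. }
  assert (Hpc : Rpower b c <= Rpower b (c / 2)) by (apply rp_expo_le; lra).
  pose proof (rp_pos b c). pose proof (rp_pos b (c / 2)).
  specialize (HYy b ltac:(lra)).
  apply Rle_lt_trans with ((/ e + K) * Rpower b (c / 2)).
  - rewrite Rmult_plus_distr_r, Rmult_plus_distr_r. apply Rplus_le_compat.
    + rewrite <- E. unfold Rdiv in Hln. 
      replace (/ e * (Rpower b e * Rpower b c)) with ((Rpower b e * / e) * Rpower b c) by ring.
      apply Rmult_le_compat_r; lra.
    + apply Rmult_le_compat_l; lra.
  - pose proof (Rinv_0_lt_compat e He0).
    set (Q := / e + K + 1) in *. assert (HQ : 0 < Q) by (unfold Q; lra).
    apply Rle_lt_trans with (Q * Rpower b (c / 2)). { unfold Q; nra. }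
    replace eps with (Q * (eps / Q)) by (field; lra).
    apply Rmult_lt_compat_l; lra.
Qed.

Lemma alna_small K : 0 <= K -> forall eps, 0 < eps ->
  exists del, 0 < del /\ del <= 1 /\ forall a, 0 < a < del -> a * (Rabs (ln a) + K) < eps.
Proof.
  intros HK eps He. set (q := eps / (2 + K)).
  assert (Hq : 0 < q) by (unfold q; apply Rdiv_lt_0_compat; lra).
  exists (Rmin 1 (q * q)). split; [apply Rmin_case; nra|]. split; [apply Rmin_l|].
  intros a [Ha Had]. pose proof (Rmin_l 1 (q * q)). pose proof (Rmin_r 1 (q * q)).
  set (s := sqrt a).
  assert (Hs : 0 < s) by (apply sqrt_lt_R0; lra).
  assert (Hss : s * s = a) by (apply sqrt_sqrt; lra).
  assert (Hs1 : s < 1) by (apply Rnot_le_lt; intro; nra).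
  assert (Hsq : s < q) by (apply Rnot_le_lt; intro; nra).
  assert (Hl : Rabs (ln a) < 2 / s).
  { rewrite Rabs_left.
    2:{ rewrite <- ln_1. apply ln_increasing; lra. }
    rewrite <- Hss, ln_mult by lra.
    pose proof (ln_lt_self (/ s) (Rinv_0_lt_compat s Hs)). rewrite ln_Rinv in H1 by lra.
    unfold Rdiv. lra. }
  assert (a * Rabs (ln a) < 2 * s).
  { apply Rlt_le_trans with (a * (2 / s)). { apply Rmult_lt_compat_l; lra. }
    rewrite <- Hss. apply Req_le. field. lra. }
  assert (a <= s) by nra.
  apply Rle_lt_trans with ((2 + K) * s). { nra. }
  replace eps with ((2 + K) * q) by (unfold q; field; lra). apply Rmult_lt_compat_l; lra.
Qed.



Definition Psi (F : R -> R) (x gam t : R) : R := / x * Phi F (x * t) * (ln t + 2 * gam).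

Lemma Psi_deriv (F : R -> R) (x gam t : R) : (forall y, continuous F y) -> 0 < x -> 0 < t ->
  is_derive (Psi F x gam) t (F (x * t) * (ln t + 2 * gam) + hh F (x * t)).
Proof.
  intros Hc Hx Ht. unfold Psi.
  auto_derive.
  - split; [|split; [lra|exact I]]. exists (F (x * t)). apply Phi_deriv; exact Hc.
  - replace (Derive (fun x0 : R => Phi F x0) (x * t)) with (F (x * t)).
    + unfold hh. field. split; lra.
    + symmetry. apply is_derive_unique. apply Phi_deriv; exact Hc.
Qed.

Lemma lin_cont (x t : R) : continuous (fun t => x * t) t.
Proof. apply (exd_cont _ _ (x * 1)). apply (is_derive_scal (fun t => t) t x 1). apply (is_derive_id (K := R_AbsRing)). Qed.

Lemma D_cont (F : R -> R) (x gam t : R) : (forall y, continuous F y) -> 0 < x -> 0 < t ->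
  continuous (fun t => F (x * t) * (ln t + 2 * gam) + hh F (x * t)) t.
Proof.
  intros Hc Hx Ht. apply cont_plus.
  - apply cont_mult. { apply cont_dil; exact Hc. }
    apply cont_plus. { apply (exd_cont _ _ (/ t)). apply is_derive_ln; exact Ht. }
    apply (continuous_const (U := R_UniformSpace) (V := R_UniformSpace)).
  - apply (continuous_comp (fun t => x * t) (hh F)). { apply lin_cont. }
    apply hh_cont; [exact Hc|nra].
Qed.

Lemma kf_RInt (F : R -> R) (x gam a b : R) : (forall y, continuous F y) -> 0 < x -> 0 < a <= b ->
  RInt (fun t => F (x * t) * (ln t + 2 * gam)) a b = Psi F x gam b - Psi F x gam a - RInt (hh F) (x * a) (x * b) / x.
Proof.
  intros Hc Hx Hab.
  assert (HI : is_RInt (fun t => F (x * t) * (ln t + 2 * gam) + hh F (x * t)) a b (minus (Psi F x gam b) (Psi F x gam a))).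
  { apply (is_RInt_derive (V := R_CompleteNormedModule) (Psi F x gam)).
    - intros t Ht. rewrite Rmin_left, Rmax_right in Ht by lra. apply Psi_deriv; [exact Hc|lra|lra].
    - intros t Ht. rewrite Rmin_left, Rmax_right in Ht by lra. apply D_cont; [exact Hc|lra|lra]. }
  assert (E1 : RInt (fun t => F (x * t) * (ln t + 2 * gam) + hh F (x * t)) a b = Psi F x gam b - Psi F x gam a).
  { apply (is_RInt_unique (V := R_CompleteNormedModule)). exact HI. }
  assert (Hex1 : ex_RInt (fun t => F (x * t) * (ln t + 2 * gam)) a b).
  { apply exR. intros z Hz. rewrite Rmin_left in Hz by lra.
    apply cont_mult. { apply cont_dil; exact Hc. }
    apply cont_plus. { apply (exd_cont _ _ (/ z)). apply is_derive_ln; lra. }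
    apply (continuous_const (U := R_UniformSpace) (V := R_UniformSpace)). }
  assert (Hex2 : ex_RInt (fun t => hh F (x * t)) a b).
  { apply exR. intros z Hz. rewrite Rmin_left in Hz by lra.
    apply (continuous_comp (fun t => x * t) (hh F)). { apply lin_cont. } apply hh_cont; [exact Hc|nra]. }
  pose proof (RInt_plus (V := R_CompleteNormedModule) _ _ a b Hex1 Hex2) as E2.
  assert (E2' : RInt (fun t => F (x * t) * (ln t + 2 * gam) + hh F (x * t)) a b =
     RInt (fun t => F (x * t) * (ln t + 2 * gam)) a b + RInt (fun t => hh F (x * t)) a b) by exact E2.
  rewrite (RInt_dil (hh F) x a b Hx) in E2' by (apply hh_ex; [exact Hc|nra|nra]).
  lra.
Qed.

Lemma Psi_a_bound al F M0 M1 Bf x gam a : 1 < al -> FH al F M0 M1 Bf -> 0 < x -> 0 < a -> x * a <= 1 ->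
  Rabs (Psi F x gam a) <= M0 * (a * (Rabs (ln a) + 2 * Rabs gam)).
Proof.
  intros Hal HF Hx Ha Hxa. pose proof (FH_nonneg al F M0 M1 Bf Hal HF) as [HM0 _].
  destruct HF as [Hc [Hb _]].
  unfold Psi. rewrite !Rabs_mult, Rabs_inv, (Rabs_right x) by lra.
  pose proof (Phi_small F M0 (x * a) Hc Hb ltac:(split; nra)).
  assert (Rabs (ln a + 2 * gam) <= Rabs (ln a) + 2 * Rabs gam).
  { eapply Rle_trans. apply Rabs_triang. rewrite Rabs_mult, (Rabs_right 2) by lra. lra. }
  apply Rle_trans with (/ x * (M0 * (x * a)) * (Rabs (ln a) + 2 * Rabs gam)).
  - apply Rmult_le_compat; [|apply Rabs_pos| |exact H0].
    + apply Rmult_le_pos; [apply Rlt_le, Rinv_0_lt_compat; lra|apply Rabs_pos].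
    + apply Rmult_le_compat_l; [apply Rlt_le, Rinv_0_lt_compat; lra|exact H].
  - apply Req_le. field. lra.
Qed.

Lemma Psi_b_bound al F M0 M1 Bf x gam b : 1 < al -> FH al F M0 M1 Bf -> 0 < x -> 1 <= b ->
  Rabs (Psi F x gam b) <= (M0 + Bf / (al - 1)) * Rpower x (1 - al) / x * ((ln b + 2 * Rabs gam) * Rpower b (1 - al)).
Proof.
  intros Hal HF Hx Hb1. pose proof (FH_nonneg al F M0 M1 Bf Hal HF) as [HM0 [_ [_ [HBp _]]]].
  destruct HF as [Hc [Hb [Hlip [Hd Hz]]]].
  unfold Psi. rewrite !Rabs_mult, Rabs_inv, (Rabs_right x) by lra.
  pose proof (Phi_global al F M0 Bf (x * b) Hal Hc Hb Hd Hz ltac:(nra)) as H.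
  rewrite rp_mul in H by lra.
  assert (Hln0 : 0 <= ln b) by (destruct (Req_dec b 1) as [->|]; [rewrite ln_1; lra|left; rewrite <- ln_1; apply ln_increasing; lra]).
  assert (Rabs (ln b + 2 * gam) <= ln b + 2 * Rabs gam).
  { eapply Rle_trans. apply Rabs_triang. rewrite Rabs_mult, (Rabs_right 2), (Rabs_right (ln b)) by lra. lra. }
  apply Rle_trans with (/ x * ((M0 + Bf / (al - 1)) * (Rpower x (1 - al) * Rpower b (1 - al))) * (ln b + 2 * Rabs gam)).
  - apply Rmult_le_compat; [|apply Rabs_pos| |exact H0].
    + apply Rmult_le_pos; [apply Rlt_le, Rinv_0_lt_compat; lra|apply Rabs_pos].
    + apply Rmult_le_compat_l; [apply Rlt_le, Rinv_0_lt_compat; lra|exact H].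
  - apply Req_le. field. lra.
Qed.

Lemma vor_improper al F M0 M1 Bf Lh (x gam : R) (f : R -> R) : 1 < al -> FH al F M0 M1 Bf ->
  (forall t, 0 <= t -> F t = f t) ->
  (forall eps, 0 < eps -> exists d M, 0 < d /\ 0 < M /\
      forall a b, 0 < a -> a < d -> M < b -> Rabs (RInt (hh F) a b - Lh) < eps) ->
  0 < x -> improper_int (fun t => f (x * t) * (ln t + 2 * gam)) (- Lh / x).
Proof.
  intros Hal HF HFf HL Hx. pose proof (FH_nonneg al F M0 M1 Bf Hal HF) as [HM0 [_ [_ [HBp _]]]].
  pose proof HF as [Hc _].
  assert (Hext : forall a b, 0 < a <= b -> forall t, Rmin a b < t < Rmax a b ->
            F (x * t) * (ln t + 2 * gam) = f (x * t) * (ln t + 2 * gam)).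
  { intros a b Hab t Ht. rewrite Rmin_left in Ht by lra. rewrite HFf by nra. reflexivity. }
  apply mk_improper.
  - intros a b Ha Hab. apply (ex_RInt_ext (V := R_NormedModule) (fun t => F (x * t) * (ln t + 2 * gam))).
    + apply Hext. lra.
    + apply exR. intros z Hz. rewrite Rmin_left in Hz by lra.
      apply cont_mult. { apply cont_dil; exact Hc. }
      apply cont_plus. { apply (exd_cont _ _ (/ z)). apply is_derive_ln; lra. }
      apply (continuous_const (U := R_UniformSpace) (V := R_UniformSpace)).
  - intros eps He.
    set (G := (M0 + Bf / (al - 1)) * Rpower x (1 - al) / x).
    assert (HG : 0 <= G).
    { unfold G. pose proof (rp_pos x (1 - al)). apply Rmult_le_pos; [nra|apply Rlt_le, Rinv_0_lt_compat; lra]. }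
    destruct (HL (eps / 3 * x) ltac:(nra)) as [d0 [Mh [Hd0 [HMh HLh]]]].
    destruct (alna_small (2 * Rabs gam) ltac:(pose proof (Rabs_pos gam); lra) (eps / 3 / (M0 + 1)) ltac:(apply Rdiv_lt_0_compat; lra))
      as [d1 [Hd1 [Hd11 Hal1]]].
    destruct (lnpow_small (1 - al) (2 * Rabs gam) ltac:(lra) ltac:(pose proof (Rabs_pos gam); lra) (eps / 3 / (G + 1)) ltac:(apply Rdiv_lt_0_compat; lra))
      as [Y [HY1 HYy]].
    exists (Rmin (Rmin (d0 / x) d1) (1 / x)), (Rmax (Mh / x) Y + 1).
    split. { repeat apply Rmin_case; try lra; apply Rdiv_lt_0_compat; lra. }
    split. { pose proof (Rmax_r (Mh / x) Y). lra. }
    intros a b Ha Had Hb.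
    pose proof (Rmin_l (Rmin (d0 / x) d1) (1 / x)). pose proof (Rmin_r (Rmin (d0 / x) d1) (1 / x)).
    pose proof (Rmin_l (d0 / x) d1). pose proof (Rmin_r (d0 / x) d1).
    pose proof (Rmax_l (Mh / x) Y). pose proof (Rmax_r (Mh / x) Y).
    assert (Hxa : x * a <= 1).
    { assert (a < 1 / x) by lra. apply Rmult_lt_compat_l with (r := x) in H5; [|lra].
      replace (x * (1 / x)) with 1 in H5 by (field; lra). lra. }
    assert (Hxad : x * a < d0).
    { assert (a < d0 / x) by lra. apply Rmult_lt_compat_l with (r := x) in H5; [|lra].
      replace (x * (d0 / x)) with d0 in H5 by (field; lra). lra. }
    assert (Hxb : Mh < x * b).
    { assert (Mh / x < b) by lra. apply Rmult_lt_compat_l with (r := x) in H5; [|lra].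
      replace (x * (Mh / x)) with Mh in H5 by (field; lra). lra. }
    assert (Hab : a <= b) by lra.
    rewrite <- (RInt_ext _ _ a b (Hext a b ltac:(lra))).
    rewrite (kf_RInt F x gam a b Hc Hx ltac:(lra)).
    specialize (HLh (x * a) (x * b) ltac:(nra) Hxad Hxb).
    pose proof (Psi_a_bound al F M0 M1 Bf x gam a Hal HF Hx Ha Hxa) as PA.
    pose proof (Psi_b_bound al F M0 M1 Bf x gam b Hal HF Hx ltac:(lra)) as PB.
    specialize (Hal1 a ltac:(lra)). specialize (HYy b ltac:(lra)).
    assert (A1 : Rabs (Psi F x gam a) < eps / 3).
    { eapply Rle_lt_trans; [exact PA|].
      assert (0 <= a * (Rabs (ln a) + 2 * Rabs gam)) by (pose proof (Rabs_pos (ln a)); pose proof (Rabs_pos gam); nra).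
      apply Rle_lt_trans with ((M0 + 1) * (a * (Rabs (ln a) + 2 * Rabs gam))). { nra. }
      replace (eps / 3) with ((M0 + 1) * (eps / 3 / (M0 + 1))) by (field; lra).
      apply Rmult_lt_compat_l; lra. }
    assert (A2 : Rabs (Psi F x gam b) < eps / 3).
    { eapply Rle_lt_trans; [exact PB|]. fold G.
      assert (0 <= (ln b + 2 * Rabs gam) * Rpower b (1 - al)).
      { apply Rmult_le_pos; [|apply Rlt_le, rp_pos].
        assert (0 <= ln b) by (destruct (Req_dec b 1) as [->|]; [rewrite ln_1; lra|left; rewrite <- ln_1; apply ln_increasing; lra]).
        pose proof (Rabs_pos gam). lra. }
      apply Rle_lt_trans with ((G + 1) * ((ln b + 2 * Rabs gam) * Rpower b (1 - al))). { nra. }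
      replace (eps / 3) with ((G + 1) * (eps / 3 / (G + 1))) by (field; lra).
      apply Rmult_lt_compat_l; lra. }
    assert (A3 : Rabs (RInt (hh F) (x * a) (x * b) / x - Lh / x) < eps / 3).
    { replace (RInt (hh F) (x * a) (x * b) / x - Lh / x) with ((RInt (hh F) (x * a) (x * b) - Lh) / x) by (field; lra).
      unfold Rdiv at 1. rewrite Rabs_mult, Rabs_inv, (Rabs_right x) by lra.
      apply Rmult_lt_reg_r with x; [lra|]. rewrite Rmult_assoc, Rinv_l by lra.
      replace (eps / 3 * x) with (eps / 3 * x) by ring. lra. }
    replace (Psi F x gam b - Psi F x gam a - RInt (hh F) (x * a) (x * b) / x - - Lh / x)
      with (Psi F x gam b + (- Psi F x gam a) + (- (RInt (hh F) (x * a) (x * b) / x - Lh / x))) by (field; lra).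
    pose proof (Rabs_triang (Psi F x gam b + - Psi F x gam a) (- (RInt (hh F) (x * a) (x * b) / x - Lh / x))).
    pose proof (Rabs_triang (Psi F x gam b) (- Psi F x gam a)).
    rewrite Rabs_Ropp in H5, H6. lra.
Qed.



Lemma count_filter (p : nat -> bool) s len :
  INR (length (filter p (seq s len))) = sumN (fun m => if p (s + m)%nat then 1 else 0) len.
Proof.
  induction len.
  - reflexivity.
  - rewrite seq_S, filter_app, length_app, plus_INR, IHlen, sumN_S. f_equal.
    simpl. destruct (p (s + len)%nat); simpl; reflexivity.
Qed.

Lemma ndiv_sum n : INR (ndiv n) = sumN (fun m => if Nat.eqb (Nat.modulo n (m + 1)) 0 then 1 else 0) n.
Proof.
  unfold ndiv. rewrite count_filter. apply sumN_ext. intros i _.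
  replace (1 + i)%nat with (i + 1)%nat by lia. reflexivity.
Qed.

Lemma div_step K m : (S K / (m + 1) = K / (m + 1) + (if Nat.eqb (S K mod (m + 1)) 0 then 1 else 0))%nat /\
  (Nat.eqb (S K mod (m + 1)) 0 = true -> (m + 1) * (S K / (m + 1)) = S K)%nat.
Proof.
  assert (Hm : (m + 1 <> 0)%nat) by lia.
  pose proof (Nat.div_mod K (m + 1) Hm) as E. pose proof (Nat.mod_upper_bound K (m + 1) Hm) as B.
  set (q := (K / (m + 1))%nat) in *. set (r := (K mod (m + 1))%nat) in *.
  destruct (Nat.eq_dec r m) as [Hr|Hr].
  - assert (Hd : (S K / (m + 1) = q + 1)%nat) by (symmetry; apply (Nat.div_unique _ _ _ 0); lia).
    assert (Hmod : (S K mod (m + 1) = 0)%nat) by (symmetry; apply (Nat.mod_unique _ _ (q + 1) 0); lia).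
    rewrite Hd, Hmod. simpl. split; [reflexivity|]. intros _. lia.
  - assert (Hd : (S K / (m + 1) = q)%nat) by (symmetry; apply (Nat.div_unique _ _ _ (r + 1)); lia).
    assert (Hmod : (S K mod (m + 1) = r + 1)%nat) by (symmetry; apply (Nat.mod_unique _ _ q (r + 1)); lia).
    rewrite Hd, Hmod. replace (Nat.eqb (r + 1) 0) with false by (symmetry; apply Nat.eqb_neq; lia).
    split; [lia|]. intros H; discriminate.
Qed.

Definition inner (phi : nat -> R) (m N : nat) : R := sumN (fun j => phi ((m + 1) * (j + 1))%nat) N.

Lemma inner_step phi K m : inner phi m (S K / (m + 1)) =
  inner phi m (K / (m + 1)) + (if Nat.eqb (S K mod (m + 1)) 0 then phi (S K) else 0).
Proof.
  destruct (div_step K m) as [E1 E2].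
  destruct (Nat.eqb (S K mod (m + 1)) 0) eqn:Hb.
  - specialize (E2 eq_refl). rewrite E1 in E2 |- *. unfold inner.
    replace (K / (m + 1) + 1)%nat with (S (K / (m + 1))) in * by lia. rewrite sumN_S. f_equal. f_equal.
    rewrite <- E2. f_equal. lia.
  - rewrite E1, Nat.add_0_r. ring.
Qed.

Lemma div_ident (phi : nat -> R) K :
  sumN (fun k => INR (ndiv (k + 1)) * phi (k + 1)%nat) K = sumN (fun m => inner phi m (K / (m + 1))) K.
Proof.
  induction K.
  - reflexivity.
  - rewrite sumN_S, IHK.
    transitivity (sumN (fun m => inner phi m (K / (m + 1)) + (if Nat.eqb (S K mod (m + 1)) 0 then phi (S K) else 0)) (S K)).
    2:{ apply sumN_ext. intros i _. symmetry. apply inner_step. }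
    rewrite sumN_plus. rewrite (sumN_S (fun m => inner phi m (K / (m + 1)))).
    assert (E0 : inner phi K (K / (K + 1)) = 0).
    { rewrite Nat.div_small by lia. reflexivity. }
    rewrite E0, Rplus_0_r.
    replace (K + 1)%nat with (S K) by lia.
    rewrite ndiv_sum. rewrite Rmult_comm. rewrite <- sumN_scal.
    f_equal. apply sumN_ext. intros i _. destruct (Nat.eqb (S K mod (i + 1)) 0); ring.
Qed.

Definition tau (al : R) (N : nat) : R := if Nat.eqb N 0 then Zc al else Rpower (INR N) (1 - al) / (al - 1).

Lemma Zc_pos al : 1 < al -> 0 < Zc al.
Proof. intros. unfold Zc. assert (0 < 1 / (al - 1)) by (apply Rdiv_lt_0_compat; lra). lra. Qed.

Lemma tau_le_Zc al N : 1 < al -> tau al N <= Zc al.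
Proof.
  intros Hal. unfold tau. destruct (Nat.eqb N 0) eqn:E; [lra|].
  apply Nat.eqb_neq in E. assert (1 <= INR N) by (replace 1 with (INR 1) by reflexivity; apply le_INR; lia).
  assert (Rpower (INR N) (1 - al) <= 1) by (apply rp_le1; lra).
  unfold Zc. unfold Rdiv. assert (0 < / (al - 1)) by (apply Rinv_0_lt_compat; lra). nra.
Qed.

Lemma tau_le_r al N r : 1 < al -> (1 <= r)%nat -> (r <= N)%nat -> tau al N <= Rpower (INR r) (1 - al) / (al - 1).
Proof.
  intros Hal Hr HN. unfold tau. replace (Nat.eqb N 0) with false by (symmetry; apply Nat.eqb_neq; lia).
  apply Rmult_le_compat_r; [apply Rlt_le, Rinv_0_lt_compat; lra|].
  apply rp_decr; [lra|]. split.
  - apply lt_0_INR; lia.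
  - apply le_INR; exact HN.
Qed.

Lemma divisor_series al B (f : R -> R) (gx : nat -> R) x Ssum : 1 < al -> 0 < x ->
  (forall t, x <= t -> Rabs (f t) <= B * Rpower t (-al)) ->
  (forall m, infinite_sum (fun n => f (INR (n + 1) * (INR (m + 1) * x))) (gx m)) ->
  infinite_sum gx Ssum ->
  infinite_sum (fun k => INR (ndiv (k + 1)) * f (INR (k + 1) * x)) Ssum.
Proof.
  intros Hal Hx Hf Hg HS.
  assert (HB : 0 <= B) by (apply (coef_nonneg (f x) B (Rpower x (-al))); [apply Hf; lra|apply rp_pos]).
  set (c0 := B * Rpower x (-al)).
  assert (Hc0 : 0 <= c0) by (unfold c0; pose proof (rp_pos x (-al)); nra).
  pose proof (Zc_pos al Hal) as HZ.
  set (phi := fun n : nat => f (INR n * x)).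
  assert (TB : forall m n, Rabs (f (INR (n + 1) * (INR (m + 1) * x))) <= c0 * qq al m * qq al n).
  { intros m n. pose proof (pos_INR n). pose proof (pos_INR m).
    eapply Rle_trans. { apply Hf. rewrite !INR_p1.
      assert (1 <= (INR n + 1) * (INR m + 1)) by nra.
      replace ((INR n + 1) * ((INR m + 1) * x)) with (((INR n + 1) * (INR m + 1)) * x) by ring. nra. }
    rewrite !INR_p1. rewrite rp_mul by nra. rewrite rp_mul by lra. unfold c0, qq. apply Req_le. ring. }
  assert (Tail : forall m N, Rabs (gx m - inner phi m N) <= c0 * qq al m * tau al N).
  { intros m N.
    replace (inner phi m N) with (sumN (fun n => f (INR (n + 1) * (INR (m + 1) * x))) N).
    2:{ apply sumN_ext. intros j _. unfold phi. f_equal. rewrite mult_INR. ring. }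
    apply (isum_tail _ _ (fun n => c0 * qq al m * qq al n)); [apply Hg|apply TB|].
    intros M. rewrite sumN_ind_scal. apply Rmult_le_compat_l; [pose proof (qq_pos al m); nra|].
    unfold tau. destruct (Nat.eqb N 0) eqn:E.
    - apply Nat.eqb_eq in E. subst N. eapply Rle_trans; [|apply (total_qq al M Hal)].
      apply Req_le. apply sumN_ext. intros; reflexivity.
    - apply Nat.eqb_neq in E. apply tail_qq; [exact Hal|lia]. }
  apply isum_sumN. intros eps He.
  destruct (proj1 (isum_sumN gx Ssum) HS (eps / 2) ltac:(lra)) as [N1 HN1].
  set (q := eps / 2 * (al - 1) / (2 * c0 * Zc al + 1)).
  assert (Hq : 0 < q) by (unfold q; apply Rdiv_lt_0_compat; [nra|nra]).
  destruct (rp_small q (1 - al) Hq ltac:(lra)) as [Y [HY HYy]].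
  destruct (INR_unbounded Y) as [r0' Hr0'].
  set (r0 := S r0').
  assert (Hr0Y : Y < INR r0) by (unfold r0; rewrite S_INR; lra).
  exists (Nat.max N1 (r0 * r0)). intros K HK.
  set (r := Nat.sqrt K).
  assert (Hrr : (r0 <= r)%nat).
  { unfold r. rewrite <- (Nat.sqrt_square r0). apply Nat.sqrt_le_mono. lia. }
  assert (Hr1 : (1 <= r)%nat) by (unfold r0 in Hrr; lia).
  pose proof (Nat.sqrt_spec K (Nat.le_0_l K)) as [Hsq _]. fold r in Hsq.
  set (Tr := Rpower (INR r) (1 - al) / (al - 1)).
  assert (HTr : 0 <= Tr) by (unfold Tr; apply Rlt_le, Rdiv_lt_0_compat; [apply rp_pos|lra]).
  assert (HTr' : Tr <= q / (al - 1)).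
  { unfold Tr. apply Rmult_le_compat_r; [apply Rlt_le, Rinv_0_lt_compat; lra|].
    apply Rle_trans with (Rpower (INR r0) (1 - al)).
    - apply rp_decr; [lra|]. split; [apply lt_0_INR; unfold r0; lia|apply le_INR; exact Hrr].
    - left. apply HYy. lra. }
  replace (sumN (fun k => INR (ndiv (k + 1)) * f (INR (k + 1) * x)) K) with
    (sumN (fun k => INR (ndiv (k + 1)) * phi (k + 1)%nat) K) by reflexivity.
  rewrite (div_ident phi K).
  specialize (HN1 K ltac:(lia)).
  assert (D : Rabs (sumN gx K - sumN (fun m => inner phi m (K / (m + 1))) K) <= 2 * c0 * Zc al * Tr).
  { rewrite <- sumN_minus.
    eapply Rle_trans.
    { apply (sumN_abs _ (fun m => c0 * qq al m * Tr + c0 * Zc al * (if (r <=? m)%nat then qq al m else 0))).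
      intros m Hm. eapply Rle_trans; [apply Tail|].
      pose proof (qq_pos al m).
      destruct (r <=? m)%nat eqn:E.
      - pose proof (tau_le_Zc al (K / (m + 1)) Hal).
        assert (c0 * qq al m * tau al (K / (m + 1)) <= c0 * qq al m * Zc al) by (apply Rmult_le_compat_l; nra).
        assert (0 <= c0 * qq al m * Tr) by (apply Rmult_le_pos; nra).
        nra.
      - apply Nat.leb_gt in E.
        assert (Hd : (r <= K / (m + 1))%nat).
        { apply Nat.div_le_lower_bound; [lia|]. nia. }
        pose proof (tau_le_r al (K / (m + 1)) r Hal Hr1 Hd). fold Tr in H0.
        assert (c0 * qq al m * tau al (K / (m + 1)) <= c0 * qq al m * Tr) by (apply Rmult_le_compat_l; nra).
        lra. }
    rewrite sumN_plus. rewrite (sumN_ext (fun m => c0 * qq al m * Tr) (fun m => (c0 * Tr) * qq al m)) by (intros; ring).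
    rewrite !sumN_scal.
    pose proof (total_qq al K Hal). pose proof (tail_qq al r K Hal Hr1). fold Tr in H0.
    assert (c0 * Tr * sumN (qq al) K <= c0 * Tr * Zc al) by (apply Rmult_le_compat_l; nra).
    assert (c0 * Zc al * sumN (fun m => if (r <=? m)%nat then qq al m else 0) K <= c0 * Zc al * Tr) by (apply Rmult_le_compat_l; nra).
    nra. }
  assert (2 * c0 * Zc al * Tr < eps / 2).
  { apply Rle_lt_trans with (2 * c0 * Zc al * (q / (al - 1))). { apply Rmult_le_compat_l; nra. }
    unfold q. replace (2 * c0 * Zc al * (eps / 2 * (al - 1) / (2 * c0 * Zc al + 1) / (al - 1)))
      with (eps / 2 * ((2 * c0 * Zc al) / (2 * c0 * Zc al + 1))) by (field; nra).
    assert (0 <= 2 * c0 * Zc al) by nra.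
    assert ((2 * c0 * Zc al) / (2 * c0 * Zc al + 1) < 1).
    { apply Rmult_lt_reg_r with (2 * c0 * Zc al + 1); [lra|]. unfold Rdiv. rewrite Rmult_assoc, Rinv_l by lra. lra. }
    nra. }
  pose proof (Rabs_triang (sumN (fun m => inner phi m (K / (m + 1))) K - sumN gx K) (sumN gx K - Ssum)) as T9.
  replace (sumN (fun m => inner phi m (K / (m + 1))) K - sumN gx K + (sumN gx K - Ssum))
    with (sumN (fun m => inner phi m (K / (m + 1))) K - Ssum) in T9 by ring.
  rewrite Rabs_minus_sym in D. lra.
Qed.



Lemma ext_deriv (f f1 : R -> R) (y : R) : 0 < y -> derivable_pt_lim f y (f1 y) -> is_derive (ext0 f) y (f1 y).
Proof.
  intros Hy Hd. apply (is_derive_ext_loc f).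
  - exists (mkposreal y Hy). intros z Hz. cbv in Hz. unfold ext0. rewrite Rmax_right; [reflexivity|].
    change (Rabs (z - y) < y) in Hz. apply Rabs_def2 in Hz. lra.
  - apply is_derive_Reals. exact Hd.
Qed.

Lemma M_alpha_FH al (f g : R -> R) : 1 < al -> M_alpha al f ->
  (forall y, 0 < y -> continuous g y) ->
  (exists Cg Xg, 0 < Xg /\ forall t, Xg <= t -> Rabs (g t) <= Cg * Rpower t (-al)) ->
  (forall y, 0 < y -> Muntz_at f y (g y)) ->
  exists M0 M1 Bf, FH al (ext0 f) M0 M1 Bf /\
    (forall y, 0 < y -> infinite_sum (fun n => f (INR (n + 1) * y)) (g y)).
Proof.
  intros Hal [f1 [f2 [Hd1 [Hd2 [Hr0 [Hr1 [Hc2 [C [X [HX Hdec]]]]]]]]]] Hgc [Cg [Xg [HXg Hgdec]]] HM.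
  set (F := ext0 f).
  assert (HcF : forall y, continuous F y).
  { apply ext0_cont. { intros y Hy. apply (dpl_cont f y (f1 y)). apply Hd1; exact Hy. }
    apply (right_deriv_cont f (f1 0)). exact Hr0. }
  assert (HcF1 : forall y, continuous (ext0 f1) y).
  { apply ext0_cont. { intros y Hy. apply (dpl_cont f1 y (f2 y)). apply Hd2; exact Hy. }
    apply (right_deriv_cont f1 (f2 0)). exact Hr1. }
  destruct (cont_bound F 0 1 ltac:(lra) (fun z _ => HcF z)) as [M0 [HM0 HbM0]].
  destruct (cont_bound (ext0 f1) 0 1 ltac:(lra) (fun z _ => HcF1 z)) as [M1 [HM1 HbM1]].
  assert (Hlip : forall s t, 0 <= s <= 1 -> 0 <= t <= 1 -> Rabs (F t - F s) <= M1 * Rabs (t - s)).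
  { intros s t Hs Ht.
    destruct (MVT_gen F s t (ext0 f1)) as [c [Hc Heq]].
    - intros z Hz. assert (Hz0 : 0 < z) by (pose proof (Rmin_case s t (fun u => 0 <= u) ltac:(lra) ltac:(lra)); lra).
      rewrite (ext0_eq f1 z) by lra. apply ext_deriv; [exact Hz0|]. apply Hd1. exact Hz0.
    - intros z Hz. apply continuity_pt_filterlim. apply HcF.
    - rewrite Heq, Rabs_mult. apply Rmult_le_compat_r; [apply Rabs_pos|].
      apply HbM1. split.
      + pose proof (Rmin_case s t (fun u => 0 <= u) ltac:(lra) ltac:(lra)). lra.
      + pose proof (Rmax_case s t (fun u => u <= 1) ltac:(lra) ltac:(lra)). lra. }
  destruct (decay_glob F al C X 1 ltac:(lra) ltac:(lra) HX (fun z _ => HcF z)) as [Bf [HBf HdBf]].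
  { intros t Ht. unfold F. rewrite ext0_eq by lra. apply Hdec. exact Ht. }
  destruct (decay_glob g al Cg Xg 1 ltac:(lra) ltac:(lra) HXg) as [Bg [HBg HdBg]].
  { intros z Hz. apply Hgc. lra. } { exact Hgdec. }
  destruct (HM 1 ltac:(lra)) as [S1 [I [_ [HI _]]]].
  assert (HfF : forall t, 0 <= t -> f t = F t) by (intros; unfold F; rewrite ext0_eq; auto).
  assert (HI0 : I = 0).
  { set (K := Bf * Zc al + Bg).
    assert (HKI : forall y, 1 <= y -> Rabs I <= K * Rpower y (1 - al)).
    { intros y Hy. destruct (HM y ltac:(lra)) as [Sy [Iy [Hsy [HIy Hgy]]]].
      rewrite (improper_unique f I Iy HI HIy).
      assert (HS : Rabs Sy <= Bf * Rpower y (-al) * Zc al).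
      { apply (isum_bound _ _ (fun n => Bf * Rpower y (-al) * qq al n) _ Hsy).
        - intros n. rewrite HfF by (rewrite INR_p1; pose proof (pos_INR n); nra).
          apply (term_bound al Bf F y y n); [lra|intros; apply HdBf; lra|lra].
        - intros M. rewrite sumN_scal. apply Rmult_le_compat_l; [pose proof (rp_pos y (-al)); nra|].
          apply total_qq; exact Hal. }
      pose proof (HdBg y Hy).
      assert (Iy = y * (Sy - g y)) by (rewrite Hgy; field; lra). rewrite H0.
      rewrite Rabs_mult, (Rabs_right y) by lra.
      assert (Rabs (Sy - g y) <= K * Rpower y (-al)).
      { unfold K. pose proof (Rabs_triang Sy (- g y)). rewrite Rabs_Ropp in H1.
        unfold Rminus. eapply Rle_trans; [exact H1|]. nra. }
      replace (Rpower y (1 - al)) with (y * Rpower y (-al)).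
      2:{ replace (1 - al) with (1 + - al) by ring. rewrite Rpower_plus, Rpower_1; lra. }
      replace (K * (y * Rpower y (- al))) with (y * (K * Rpower y (-al))) by ring.
      apply Rmult_le_compat_l; lra. }
    assert (HK : 0 <= K) by (unfold K; pose proof (Zc_pos al Hal); nra).
    apply Rabs_eq_0. apply Rle_antisym; [|apply Rabs_pos].
    apply Rnot_lt_le. intros Hpos.
    destruct (rp_small (Rabs I / (K + 1)) (1 - al)) as [Y [HY HYy]].
    { apply Rdiv_lt_0_compat; lra. } { lra. }
    specialize (HKI (Rmax 1 Y) (Rmax_l 1 Y)). specialize (HYy (Rmax 1 Y) (Rmax_r 1 Y)).
    pose proof (rp_pos (Rmax 1 Y) (1 - al)).
    assert (K * Rpower (Rmax 1 Y) (1 - al) < Rabs I).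
    { apply Rle_lt_trans with ((K + 1) * Rpower (Rmax 1 Y) (1 - al)). { nra. }
      replace (Rabs I) with ((K + 1) * (Rabs I / (K + 1))) by (field; lra).
      apply Rmult_lt_compat_l; lra. }
    lra. }
  subst I.
  assert (Hz : forall eps, 0 < eps -> exists M, forall b, M < b -> Rabs (Phi F b) < eps).
  { intros eps He. destruct (improper_RInt f 0 HI (eps / 2) ltac:(lra)) as [d [M [Hd [HM' Hlim]]]].
    exists (Rmax M 1). intros b Hb.
    pose proof (Rmax_l M 1). pose proof (Rmax_r M 1).
    set (a := Rmin (Rmin (d / 2) (eps / (2 * (M0 + 1)))) (1 / 2)).
    assert (Ha : 0 < a) by (unfold a; repeat apply Rmin_case; try lra; apply Rdiv_lt_0_compat; lra).
    assert (Had : a < d) by (unfold a; pose proof (Rmin_l (Rmin (d / 2) (eps / (2 * (M0 + 1)))) (1 / 2)); pose proof (Rmin_l (d / 2) (eps / (2 * (M0 + 1)))); lra).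
    assert (Hae : a <= eps / (2 * (M0 + 1))) by (unfold a; pose proof (Rmin_l (Rmin (d / 2) (eps / (2 * (M0 + 1)))) (1 / 2)); pose proof (Rmin_r (d / 2) (eps / (2 * (M0 + 1)))); lra).
    assert (Ha1 : a <= 1 / 2) by (unfold a; apply Rmin_r).
    specialize (Hlim a b Ha Had ltac:(lra) ltac:(lra)).
    rewrite Rminus_0_r in Hlim.
    assert (E : RInt f a b = RInt F a b).
    { apply RInt_ext. intros z Hz. rewrite Rmin_left in Hz by lra. apply HfF. lra. }
    rewrite E in Hlim.
    pose proof (Phi_diff F a b HcF) as PD.
    pose proof (Phi_small F M0 a HcF HbM0 ltac:(lra)) as PS.
    assert (M0 * a <= eps / 2).
    { apply Rle_trans with (M0 * (eps / (2 * (M0 + 1)))). { apply Rmult_le_compat_l; lra. }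
      apply Rle_trans with ((M0 + 1) * (eps / (2 * (M0 + 1)))). { apply Rmult_le_compat_r; [apply Rlt_le, Rdiv_lt_0_compat; lra|lra]. }
      apply Req_le. field. lra. }
    replace (Phi F b) with (Phi F a + RInt F a b) by lra.
    pose proof (Rabs_triang (Phi F a) (RInt F a b)). lra. }
  exists M0, M1, Bf. split.
  - split; [exact HcF|]. split; [exact HbM0|]. split; [exact Hlip|]. split; [exact HdBf|exact Hz].
  - intros y Hy. destruct (HM y Hy) as [Sy [Iy [Hsy [HIy Hgy]]]].
    rewrite (improper_unique f Iy 0 HIy HI) in Hgy. rewrite Hgy. replace (Sy - 0 / y) with Sy by (field; lra).
    exact Hsy.
Qed.

Lemma M_alpha_g al (g : R -> R) : M_alpha al g ->
  (forall y, 0 < y -> continuous g y) /\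
  (exists Cg Xg, 0 < Xg /\ forall t, Xg <= t -> Rabs (g t) <= Cg * Rpower t (-al)).
Proof.
  intros [g1 [g2 [Hd1 [_ [_ [_ [_ [C [X [HX Hdec]]]]]]]]]]. split.
  - intros y Hy. apply (dpl_cont g y (g1 y)). apply Hd1; exact Hy.
  - exists C, X. split; [exact HX|]. intros t Ht. apply Hdec. exact Ht.
Qed.

Lemma single (al gam : R) (f g : R -> R) : 1 < al -> M_alpha al f ->
  (forall y, 0 < y -> Muntz_at f y (g y)) -> M_alpha al g ->
  forall x, 0 < x -> exists y, Voronoi_at gam f x y /\ Muntz_at g x y.
Proof.
  intros Hal Hf HM Hg x Hx.
  destruct (M_alpha_g al g Hg) as [Hgc Hgd].
  destruct (M_alpha_FH al f g Hal Hf Hgc Hgd HM) as [M0 [M1 [Bf [HF Hsum]]]].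
  set (F := ext0 f) in *.
  assert (HfF : forall t, 0 <= t -> F t = f t) by (intros; unfold F; rewrite ext0_eq; auto).
  pose proof HF as [HcF _].
  assert (HsumF : forall y, 0 < y -> infinite_sum (fun n => F (INR (n + 1) * y)) (g y)).
  { intros y Hy. eapply isum_ext; [|apply Hsum; exact Hy]. intros n. cbv beta.
    rewrite HfF; [reflexivity|]. rewrite INR_p1. pose proof (pos_INR n). nra. }
  destruct (Lh_exists al F M0 M1 Bf Hal HF) as [Lh HL].
  pose proof (g_improper al F M0 M1 Bf g Lh Hal HF Hgc HsumF HL) as Hgi.
  pose proof (vor_improper al F M0 M1 Bf Lh x gam f Hal HF HfF HL Hx) as Hvi.
  destruct Hgd as [Cg [Xg [HXg Hgdec]]].
  destruct (decay_glob g al Cg Xg x ltac:(lra) Hx HXg) as [Bgx [HBgx HdBgx]].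
  { intros z Hz. apply Hgc. lra. } { exact Hgdec. }
  destruct (isum_exists al (fun m => g (INR (m + 1) * x)) (Bgx * Rpower x (-al)) Hal) as [Ssum HS].
  { intros m. apply (term_bound al Bgx g x x m); [lra|exact HdBgx|lra]. }
  destruct (decay_glob F al Bf 1 x ltac:(lra) Hx ltac:(lra) (fun z _ => HcF z)) as [Bfx [HBfx HdBfx]].
  { destruct HF as [_ [_ [_ [Hd _]]]]. exact Hd. }
  assert (HV : infinite_sum (fun k => INR (ndiv (k + 1)) * f (INR (k + 1) * x)) Ssum).
  { apply (divisor_series al Bfx f (fun m => g (INR (m + 1) * x)) x Ssum Hal Hx).
    - intros t Ht. rewrite <- HfF by lra. apply HdBfx. exact Ht.
    - intros m. apply Hsum. rewrite INR_p1. pose proof (pos_INR m). nra.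
    - exact HS. }
  exists (Ssum + Lh / x). split.
  - exists Ssum, (- Lh / x). split; [exact HV|]. split; [exact Hvi|]. field. lra.
  - exists Ssum, (- Lh). split; [exact HS|]. split; [exact Hgi|]. field. lra.
Qed.

Theorem corollary2 (alpha gamma : R) (fr fi gr gi : R -> R) :
  1 < alpha ->
  is_euler_gamma gamma ->
  M_alpha_C alpha fr fi ->
  (forall x, 0 < x -> Muntz_at fr x (gr x) /\ Muntz_at fi x (gi x)) ->
  M_alpha_C alpha gr gi ->
  forall x, 0 < x ->
    exists yr yi,
      Voronoi_at gamma fr x yr /\ Muntz_at gr x yr /\
      Voronoi_at gamma fi x yi /\ Muntz_at gi x yi.
Proof.
  intros Hal _ [Hfr Hfi] HM [Hgr Hgi] x Hx.
  destruct (single alpha gamma fr gr Hal Hfr (fun y Hy => proj1 (HM y Hy)) Hgr x Hx) as [yr [H1 H2]].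
  destruct (single alpha gamma fi gi Hal Hfi (fun y Hy => proj2 (HM y Hy)) Hgi x Hx) as [yi [H3 H4]].
  exists yr, yi. auto.
Qed.
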